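(* Let $L=\mathbb Z^2$ with $B(x,y)=x\begin{pmatrix}2&1\\1&8\end{pmatrix}y^T$, $Q(x)=\frac12B(x,x)$, and for $\alpha,\beta\in\mathbb Q^2$ put $\theta_{\alpha,\beta}(\tau,z)=\sum_{v\in\mathbb Z^2}e(B(\beta,v))\,e(\tau Q(\alpha+v)+B(\alpha+v,z))$ on $\mathbb H\times\mathbb C^2$. Then the 25 functions $\theta_{\alpha,\beta}^5$ with $\alpha\in\{(0,0),(\frac15,\frac35),(\frac25,\frac15),(\frac35,\frac45),(\frac45,\frac25)\}$ and $\beta\in\{(\frac j5,0):j=0,1,2,3,4\}$ are $\mathbb C$-linearly independent.
   Context: $e(x)=\exp(2\pi ix)$, $\mathbb H$ the upper half plane; $B$ is extended bilinearly to $\mathbb C^2$. *)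

(* Defs.v *)
From Stdlib Require Import Reals ZArith.
From Coquelicot Require Import Coquelicot.
Open Scope R_scope.

(* e(w) = exp(2 pi i w) for complex w *)
Definition ee (w : C) : C :=
  Cmult (RtoC (exp (- (2 * PI * Im w))))
        (cos (2 * PI * Re w), sin (2 * PI * Re w)).

Definition C2 := (C * C)%type.

Definition Bf (x y : C2) : C :=
  Cplus (Cplus (Cmult (RtoC 2) (Cmult (fst x) (fst y)))
               (Cmult (fst x) (snd y)))
        (Cplus (Cmult (snd x) (fst y))
               (Cmult (RtoC 8) (Cmult (snd x) (snd y)))).

Definition Qf (x : C2) : C := Cmult (RtoC (/2)) (Bf x x).

Definition c2_of_Z (v : Z * Z) : C2 := (RtoC (IZR (fst v)), RtoC (IZR (snd v))).
Definition c2_of_R (a : R * R) : C2 := (RtoC (fst a), RtoC (snd a)).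
Definition c2_add (x y : C2) : C2 := (Cplus (fst x) (fst y), Cplus (snd x) (snd y)).

Definition theta_term (alpha beta : R * R) (tau : C) (z : C2) (v : Z * Z) : C :=
  let av := c2_add (c2_of_R alpha) (c2_of_Z v) in
  Cmult (ee (Bf (c2_of_R beta) (c2_of_Z v)))
        (ee (Cplus (Cmult tau (Qf av)) (Bf av z))).

Definition theta_partial (alpha beta : R * R) (tau : C) (z : C2) (N : nat) : C :=
  sum_n (fun i => sum_n (fun j =>
     theta_term alpha beta tau z
       (Z.of_nat i - Z.of_nat N, Z.of_nat j - Z.of_nat N)%Z) (2 * N)) (2 * N).

(* theta_{alpha,beta}(tau,z): the (absolutely convergent for Im tau > 0)
   sum over Z^2, as the limit of the square partial sums *)
Definition theta (alpha beta : R * R) (tau : C) (z : C2) : C :=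
  (real (Lim_seq (fun N => Re (theta_partial alpha beta tau z N))),
   real (Lim_seq (fun N => Im (theta_partial alpha beta tau z N)))) : C.

Definition alpha_of (a : nat) : R * R :=
  match a with
  | 0%nat => (0, 0)
  | 1%nat => (1/5, 3/5)
  | 2%nat => (2/5, 1/5)
  | 3%nat => (3/5, 4/5)
  | _ => (4/5, 2/5)
  end.

Definition beta_of (b : nat) : R * R := (INR b / 5, 0).

Definition Cpow5 (w : C) : C := Cmult w (Cmult w (Cmult w (Cmult w w))).

(* Main.v *)
Require Import Defs.
From Stdlib Require Import Reals ZArith Lra Lia Psatz List.
From Coquelicot Require Import Coquelicot.
Open Scope R_scope.


Definition cis (r : R) : C := (cos r, sin r).

Lemma Cmod_cis r : Cmod (cis r) = 1.
Proof. unfold Cmod, cis; simpl.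
  pose proof (sin2_cos2 r). unfold Rsqr in H.
  replace (cos r * (cos r * 1) + sin r * (sin r * 1)) with 1 by nra. apply sqrt_1. Qed.

Lemma cis_add a b : Cmult (cis a) (cis b) = cis (a + b).
Proof. unfold cis, Cmult; simpl. rewrite cos_plus, sin_plus. f_equal; ring. Qed.

Lemma Cmod_RtoC_nn r : 0 <= r -> Cmod (RtoC r) = r.
Proof. intros. rewrite Cmod_R. apply Rabs_pos_eq; auto. Qed.

Definition Qr (p : R * R) : R := fst p ^ 2 + fst p * snd p + 4 * snd p ^ 2.
Definition Br (p x : R * R) : R := 2 * fst p * fst x + fst p * snd x + snd p * fst x + 8 * snd p * snd x.
Definition zc (x P : R * R) (t : R) : C2 := ((fst x, - t * fst P), (snd x, - t * snd P)).
Definition vR (v : Z * Z) : R * R := (IZR (fst v), IZR (snd v)).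
Definition pv (al : R * R) (v : Z * Z) : R * R := (fst al + IZR (fst v), snd al + IZR (snd v)).
Definition wv (al P : R * R) (v : Z * Z) : R * R := (fst al + IZR (fst v) - fst P, snd al + IZR (snd v) - snd P).

Lemma ee_form w : ee w = Cmult (RtoC (exp (- (2 * PI * Im w)))) (cis (2 * PI * Re w)).
Proof. reflexivity. Qed.

Lemma ee_R r : ee (RtoC r) = cis (2 * PI * r).
Proof. rewrite ee_form. unfold Im, Re, RtoC; simpl.
  replace (- (2 * PI * 0)) with 0 by ring. rewrite exp_0.
  unfold cis, Cmult; simpl. f_equal; ring. Qed.

Lemma Bf_real be v : Bf (c2_of_R be) (c2_of_Z v) = RtoC (Br be (vR v)).
Proof. destruct be as [b1 b2], v as [v1 v2].
  unfold Bf, c2_of_R, c2_of_Z, Br, vR, RtoC, Cplus, Cmult; simpl.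
  apply injective_projections; simpl; ring. Qed.

Lemma term_formula al be P x t v :
  theta_term al be (0, t) (zc x P t) v =
  Cmult (RtoC (exp (- (2 * PI * (t * (Qr (wv al P v) - Qr P))))))
        (cis (2 * PI * (Br be (vR v) + Br (pv al v) x))).
Proof.
  unfold theta_term. rewrite Bf_real, ee_R, ee_form.
  match goal with |- Cmult _ (Cmult _ (cis (2 * PI * Re ?w))) = _ =>
    assert (HR : Re w = Br (pv al v) x); [|assert (HI : Im w = t * (Qr (wv al P v) - Qr P))] end.
  { destruct al as [a1 a2], P as [P1 P2], x as [x1 x2], v as [v1 v2].
    unfold Bf, Qf, c2_of_R, c2_of_Z, c2_add, zc, Qr, Br, vR, pv, wv, Re, Im, RtoC, Cplus, Cmult; simpl. ring. }
  { destruct al as [a1 a2], P as [P1 P2], x as [x1 x2], v as [v1 v2].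
    unfold Bf, Qf, c2_of_R, c2_of_Z, c2_add, zc, Qr, Br, vR, pv, wv, Re, Im, RtoC, Cplus, Cmult; simpl. field. }
  rewrite HR, HI.
  transitivity (Cmult (RtoC (exp (- (2 * PI * (t * (Qr (wv al P v) - Qr P))))))
     (Cmult (cis (2 * PI * Br be (vR v))) (cis (2 * PI * Br (pv al v) x)))).
  { ring. }
  rewrite cis_add. f_equal. f_equal. ring.
Qed.

Lemma exp_le x y : x <= y -> exp x <= exp y.
Proof. intros [H|H]; [left; apply exp_increasing; auto | subst; lra]. Qed.

Lemma exp_le1 x : x <= 0 -> exp x <= 1.
Proof. intros. rewrite <- exp_0. apply exp_le; auto. Qed.

Definition EP := exp PI.
Lemma EP_gt1 : 1 < EP.
Proof. unfold EP. rewrite <- exp_0. apply exp_increasing. pose proof PI_RGT_0; lra. Qed.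

Definition CF0 := 1 + EP / (EP - 1) + 1 / (EP - 1).
Definition Ftel (s : R) : R :=
  if Rle_dec s 0 then exp (PI * s) / (EP - 1) else CF0 - exp (- (PI * s)) * EP / (EP - 1).

Lemma expPI_plus1 s : exp (PI * (s + 1)) = exp (PI * s) * EP.
Proof. unfold EP. rewrite <- exp_plus. f_equal; ring. Qed.
Lemma expPI_plus1' s : exp (- (PI * (s + 1))) * EP = exp (- (PI * s)).
Proof. unfold EP. rewrite <- exp_plus. f_equal; ring. Qed.

Lemma Ftel_bounds s : 0 <= Ftel s <= CF0.
Proof.
  pose proof EP_gt1 as HE. unfold Ftel, CF0.
  assert (HD : 0 < / (EP - 1)) by (apply Rinv_0_lt_compat; lra).
  destruct (Rle_dec s 0) as [n|n]; try apply Rnot_le_lt in n.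
  - assert (exp (PI * s) <= 1). { apply exp_le1. pose proof PI_RGT_0; nra. }
    pose proof (exp_pos (PI * s)). unfold Rdiv.
    assert (0 <= EP * / (EP - 1)) by nra.
    split; nra.
  - assert (exp (- (PI * s)) <= 1). { apply exp_le1. pose proof PI_RGT_0; nra. }
    pose proof (exp_pos (- (PI * s))). unfold Rdiv.
    assert (0 <= EP * / (EP - 1)) by nra.
    split; nra.
Qed.

Lemma Ftel_incr s : exp (- (PI * Rabs s)) <= Ftel (s + 1) - Ftel s.
Proof.
  pose proof EP_gt1 as HE. pose proof PI_RGT_0.
  assert (HD : 0 < / (EP - 1)) by (apply Rinv_0_lt_compat; lra).
  assert (HDD : (EP - 1) * / (EP - 1) = 1) by (field; lra).
  unfold Ftel, CF0.
  destruct (Rle_dec (s + 1) 0) as [h1|h1]; destruct (Rle_dec s 0) as [h2|h2]; try lra;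
  try apply Rnot_le_lt in h1; try apply Rnot_le_lt in h2.
  - rewrite Rabs_left by lra. rewrite expPI_plus1.
    replace (- (PI * - s)) with (PI * s) by ring. unfold Rdiv.
    pose proof (exp_pos (PI * s)). nra.
  -
    assert (exp (- (PI * Rabs s)) <= 1). { apply exp_le1. pose proof (Rabs_pos s); nra. }
    assert (exp (PI * s) <= 1). { apply exp_le1. nra. }
    assert (exp (- (PI * (s + 1))) <= 1). { apply exp_le1. nra. }
    pose proof (exp_pos (PI * s)). pose proof (exp_pos (- (PI * (s+1)))).
    unfold Rdiv. assert (0 <= EP * / (EP - 1)) by nra.
    assert (exp (- (PI * (s + 1))) * EP * / (EP - 1) <= EP * / (EP - 1)) by nra.
    assert (exp (PI * s) * / (EP - 1) <= 1 * / (EP - 1)) by nra.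
    nra.
  - rewrite Rabs_right by lra.
    rewrite <- (expPI_plus1' s). unfold Rdiv.
    pose proof (exp_pos (- (PI * (s + 1)))).
    replace (1 + EP * / (EP - 1) + 1 * / (EP - 1) - exp (- (PI * (s + 1))) * EP * / (EP - 1) -
      (1 + EP * / (EP - 1) + 1 * / (EP - 1) - exp (- (PI * (s + 1))) * EP * EP * / (EP - 1)))
     with (exp (- (PI * (s + 1))) * EP * ((EP - 1) * / (EP - 1))) by ring.
    rewrite HDD. lra.
Qed.

Lemma sum1D_bound c M : sum_n (fun i => exp (- (PI * Rabs (INR i + c)))) M <= CF0.
Proof.
  assert (forall M, sum_n (fun i => exp (- (PI * Rabs (INR i + c)))) M <= Ftel (INR M + 1 + c) - Ftel c).
  { induction M0.
    - rewrite sum_O. simpl. replace (0 + 1 + c) with ((0 + c) + 1) by ring.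
      pose proof (Ftel_incr (0 + c)). replace (0 + c) with c in * by ring. lra.
    - rewrite sum_Sn. change (plus ?a ?b) with (a + b).
      pose proof (Ftel_incr (INR (S M0) + c)).
      replace (INR (S M0) + 1 + c) with (INR (S M0) + c + 1) by ring.
      rewrite S_INR in *. replace (INR M0 + 1 + c) with (INR M0 + 1 + c) in IHM0 by ring.
      replace (INR M0 + 1 + c) with (INR M0 + 1 + c) in H by ring.
      replace (INR M0 + c + 1) with (INR M0 + 1 + c) in * by ring. lra. }
  specialize (H M). pose proof (Ftel_bounds (INR M + 1 + c)). pose proof (Ftel_bounds c). lra.
Qed.

Definition sum2 (f : Z * Z -> C) (N : nat) : C :=
  sum_n (fun i => sum_n (fun j =>
     f (Z.of_nat i - Z.of_nat N, Z.of_nat j - Z.of_nat N)%Z) (2 * N)) (2 * N).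

Lemma theta_partial_sum2 al be tau z N :
  theta_partial al be tau z N = sum2 (theta_term al be tau z) N.
Proof. reflexivity. Qed.

Definition eqv (v s : Z * Z) : bool := (Z.eqb (fst v) (fst s) && Z.eqb (snd v) (snd s))%bool.
Definition inS (v : Z * Z) (S : list (Z * Z)) : bool := existsb (eqv v) S.
Definition mainsum (f : Z * Z -> C) (S : list (Z * Z)) : C :=
  fold_right (fun s acc => Cplus (f s) acc) (RtoC 0) S.

Lemma eqv_spec v s : eqv v s = true <-> v = s.
Proof. destruct v as [a b], s as [c d]; unfold eqv; simpl.
  rewrite Bool.andb_true_iff, !Z.eqb_eq. split; [intros [-> ->]; auto | intros H; inversion H; auto]. Qed.

Lemma inS_spec v S : inS v S = true <-> In v S.
Proof. unfold inS. rewrite existsb_exists. split.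
  - intros [x [Hx He]]. apply eqv_spec in He. subst; auto.
  - intros H. exists v. split; auto. apply eqv_spec; auto. Qed.

Lemma sum_n_zero (g : nat -> C) n : (forall k, (k <= n)%nat -> g k = RtoC 0) -> sum_n g n = RtoC 0.
Proof. induction n; intros H.
  - rewrite sum_O. apply H; lia.
  - rewrite sum_Sn. rewrite IHn by (intros; apply H; lia). rewrite H by lia.
    change (plus ?a ?b) with (Cplus a b). apply Cplus_0_r. Qed.

Lemma sum_n_single (g : nat -> C) n k0 : (k0 <= n)%nat -> (forall k, k <> k0 -> g k = RtoC 0) -> sum_n g n = g k0.
Proof. induction n; intros Hk H.
  - assert (k0 = 0%nat) by lia. subst. apply sum_O.
  - rewrite sum_Sn. change (plus ?a ?b) with (Cplus a b).
    destruct (Nat.eq_dec k0 (S n)).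
    + subst. rewrite sum_n_zero by (intros; apply H; lia). apply Cplus_0_l.
    + rewrite IHn by (auto; lia). rewrite (H (S n)) by lia. apply Cplus_0_r. Qed.

Lemma sum2_delta f s N :
  (- Z.of_nat N <= fst s <= Z.of_nat N)%Z -> (- Z.of_nat N <= snd s <= Z.of_nat N)%Z ->
  sum2 (fun v => if eqv v s then f v else RtoC 0) N = f s.
Proof.
  intros H1 H2. unfold sum2.
  rewrite (sum_n_single _ _ (Z.to_nat (fst s + Z.of_nat N))).
  - rewrite (sum_n_single _ _ (Z.to_nat (snd s + Z.of_nat N))).
    + destruct (eqv _ s) eqn:E.
      * apply eqv_spec in E. rewrite E. auto.
      * exfalso. destruct s as [s1 s2]. unfold eqv in E. simpl in *.
        rewrite !Z2Nat.id in E by lia. rewrite !Z.add_simpl_r, !Z.eqb_refl in E. discriminate.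
    + lia.
    + intros k Hk. destruct (eqv _ s) eqn:E; auto. apply eqv_spec in E. destruct s as [s1 s2].
      inversion E. simpl in *. lia.
  - lia.
  - intros k Hk. apply sum_n_zero. intros j _.
    destruct (eqv _ s) eqn:E; auto. apply eqv_spec in E. destruct s as [s1 s2].
    inversion E. simpl in *. lia.
Qed.

Lemma sum2_plus f g N : sum2 (fun v => Cplus (f v) (g v)) N = Cplus (sum2 f N) (sum2 g N).
Proof. unfold sum2.
  change (Cplus ?a ?b) with (plus a b : C).
  rewrite <- sum_n_plus. apply sum_n_ext. intros i.
  change (Cplus ?a ?b) with (plus a b : C).
  rewrite <- sum_n_plus. reflexivity. Qed.

Lemma sum2_ext f g N : (forall v, f v = g v) -> sum2 f N = sum2 g N.
Proof. intros H. unfold sum2. apply sum_n_ext; intros; apply sum_n_ext; intros; apply H. Qed.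

Lemma sum2_decomp f S N :
  NoDup S -> (forall s, In s S -> (- Z.of_nat N <= fst s <= Z.of_nat N)%Z /\ (- Z.of_nat N <= snd s <= Z.of_nat N)%Z) ->
  sum2 f N = Cplus (mainsum f S) (sum2 (fun v => if inS v S then RtoC 0 else f v) N).
Proof.
  revert f. induction S as [|s S IH]; intros f HN HB.
  - simpl. rewrite Cplus_0_l. apply sum2_ext. intros; reflexivity.
  - inversion HN; subst.
    rewrite (sum2_ext f (fun v => Cplus (if eqv v s then f v else RtoC 0) (if eqv v s then RtoC 0 else f v))).
    2:{ intros v. destruct (eqv v s); [rewrite Cplus_0_r | rewrite Cplus_0_l]; auto. }
    rewrite sum2_plus. rewrite sum2_delta by (apply HB; left; auto).
    rewrite (IH (fun v => if eqv v s then RtoC 0 else f v)); auto.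
    2:{ intros; apply HB; right; auto. }
    simpl. rewrite <- Cplus_assoc. f_equal. f_equal.
    +
      clear -H1. induction S as [|s' S IH']; simpl; auto.
      f_equal.
      * destruct (eqv s' s) eqn:E; auto. apply eqv_spec in E. subst. exfalso; apply H1; left; auto.
      * apply IH'. intros Hin; apply H1; right; auto.
    + apply sum2_ext. intros v. unfold inS. simpl. destruct (eqv v s); simpl; auto.
      destruct (existsb (eqv v) S); auto.
Qed.

Lemma Cmod_sum_n (h : nat -> C) n : Cmod (sum_n h n) <= sum_n (fun i => Cmod (h i)) n.
Proof. apply (norm_sum_n_m h 0 n). Qed.

Lemma sum_n_le_R (a b : nat -> R) n : (forall k, a k <= b k) -> sum_n a n <= sum_n b n.
Proof. intros. apply sum_n_m_le; auto. Qed.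

Lemma Cmod_sum2 h N : Cmod (sum2 h N) <=
  sum_n (fun i => sum_n (fun j => Cmod (h (Z.of_nat i - Z.of_nat N, Z.of_nat j - Z.of_nat N)%Z)) (2 * N)) (2 * N).
Proof. unfold sum2. eapply Rle_trans; [apply Cmod_sum_n|]. apply sum_n_le_R. intros i. apply Cmod_sum_n. Qed.

Lemma lim_bound (u : nat -> R) l h : (forall N, (1 <= N)%nat -> l <= u N <= h) -> l <= real (Lim_seq u) <= h.
Proof.
  intros H.
  assert (H1 : Rbar_le (Lim_seq (fun _ => l)) (Lim_seq u)).
  { apply Lim_seq_le_loc. exists 1%nat. intros n Hn. apply H; auto. }
  assert (H2 : Rbar_le (Lim_seq u) (Lim_seq (fun _ => h))).
  { apply Lim_seq_le_loc. exists 1%nat. intros n Hn. apply H; auto. }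
  rewrite Lim_seq_const in H1, H2.
  destruct (Lim_seq u); simpl in *; try contradiction. lra.
Qed.

Lemma Qr_lower_aux w1 w2 a1 a2 : a1 * a1 = w1 * w1 -> a2 * a2 = w2 * w2 ->
  (a1 + a2) / 2 - / 4 <= w1 ^ 2 + w1 * w2 + 4 * w2 ^ 2.
Proof. intros.
  assert (a1 <= a1 * a1 + / 4) by (pose proof (Rle_0_sqr (a1 - / 2)); unfold Rsqr in *; nra).
  assert (a2 <= a2 * a2 + / 4) by (pose proof (Rle_0_sqr (a2 - / 2)); unfold Rsqr in *; nra).
  pose proof (Rle_0_sqr (w1 + w2)); unfold Rsqr in *.
  pose proof (Rle_0_sqr w2); unfold Rsqr in *.
  nra. Qed.

Lemma Rabs_sq x : Rabs x * Rabs x = x * x.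
Proof. rewrite <- Rabs_mult. apply Rabs_pos_eq. apply Rle_0_sqr. Qed.

Lemma Qr_lower w : (Rabs (fst w) + Rabs (snd w)) / 2 - / 4 <= Qr w.
Proof. destruct w as [w1 w2]; unfold Qr; simpl. apply Qr_lower_aux; apply Rabs_sq. Qed.

Definition nterm (al be P x : R * R) (t : R) (v : Z * Z) : C :=
  Cmult (RtoC (exp (- (2 * PI * t * Qr (wv al P v)))))
        (cis (2 * PI * (Br be (vR v) + Br (pv al v) x))).

Definition KT := 2 * exp (PI / 2) * CF0 * CF0.

Lemma nterm_eq al be P x t v :
  Cmult (RtoC (exp (- (2 * PI * t * Qr P)))) (theta_term al be (0, t) (zc x P t) v) = nterm al be P x t v.
Proof.
  rewrite term_formula. unfold nterm. rewrite Cmult_assoc. f_equal.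
  rewrite <- RtoC_mult, <- exp_plus. f_equal. f_equal. ring.
Qed.

Lemma mainsum_scale k f g S : (forall v, Cmult k (f v) = g v) -> Cmult k (mainsum f S) = mainsum g S.
Proof. intros H. induction S; simpl.
  - unfold RtoC, Cmult; simpl. apply injective_projections; simpl; ring.
  - rewrite Cmult_plus_distr_l, H, IHS. reflexivity. Qed.

Lemma Cmod_le_re_im z T : Rabs (fst z) <= T -> Rabs (snd z) <= T -> Cmod z <= 2 * T.
Proof.
  intros H1 H2. eapply Rle_trans; [apply Cmod_2Rmax|].
  assert (Rmax (Rabs (fst z)) (Rabs (snd z)) <= T) by (apply Rmax_lub; auto).
  assert (sqrt 2 <= 2).
  { rewrite <- (sqrt_square 2) at 2 by lra. apply sqrt_le_1_alt. lra. }
  assert (0 <= sqrt 2) by apply sqrt_pos.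
  assert (0 <= Rmax (Rabs (fst z)) (Rabs (snd z))) by (eapply Rle_trans; [apply Rabs_pos| apply Rmax_l]).
  nra.
Qed.

Lemma term_bound al be P x t mu S v :
  1 <= t -> 0 <= mu -> (forall v, ~ In v S -> mu <= Qr (wv al P v)) ->
  exp (- (2 * PI * t * Qr P)) * Cmod (if inS v S then RtoC 0 else theta_term al be (0,t) (zc x P t) v)
  <= exp (PI / 2) * exp (2 * PI * mu) * exp (- (2 * PI * t * mu)) *
     (exp (- (PI * Rabs (fst (wv al P v)))) * exp (- (PI * Rabs (snd (wv al P v))))).
Proof.
  intros Ht Hmu HS.
  assert (Hpos : 0 < exp (PI / 2) * exp (2 * PI * mu) * exp (- (2 * PI * t * mu)) *
     (exp (- (PI * Rabs (fst (wv al P v)))) * exp (- (PI * Rabs (snd (wv al P v)))))).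
  { repeat apply Rmult_lt_0_compat; apply exp_pos. }
  destruct (inS v S) eqn:E.
  - rewrite Cmod_0. rewrite Rmult_0_r. lra.
  - assert (Hn : ~ In v S). { intros Hin. apply inS_spec in Hin. congruence. }
    specialize (HS v Hn).
    rewrite term_formula, Cmod_mult, Cmod_cis, Cmod_RtoC_nn by (left; apply exp_pos).
    rewrite Rmult_1_r, <- !exp_plus.
    apply exp_le.
    pose proof (Qr_lower (wv al P v)) as HQ.
    pose proof PI_RGT_0.
    set (Q := Qr (wv al P v)) in *.
    set (a1 := Rabs (fst (wv al P v))) in *.
    set (a2 := Rabs (snd (wv al P v))) in *.
    assert (0 <= (t - 1) * (Q - mu)) by (apply Rmult_le_pos; lra).
    match goal with |- ?L <= ?R => assert (0 <= R - L) end.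
    { replace (PI / 2 + 2 * PI * mu + - (2 * PI * t * mu) + (- (PI * a1) + - (PI * a2)) -
        (- (2 * PI * t * Qr P) + - (2 * PI * (t * (Q - Qr P)))))
       with (PI * (2 * ((t - 1) * (Q - mu)) + 2 * (Q - ((a1 + a2) / 2 - / 4)))) by (field).
      apply Rmult_le_pos; lra. }
    lra.
Qed.

Lemma wv_shift al P N i :
  al + IZR (Z.of_nat i - Z.of_nat N) - P = INR i + (al - INR N - P).
Proof. rewrite minus_IZR, <- !INR_IZR_INZ. ring. Qed.

Lemma rest_bound al be P x t mu S N :
  1 <= t -> 0 <= mu -> (forall v, ~ In v S -> mu <= Qr (wv al P v)) ->
  exp (- (2 * PI * t * Qr P)) *
    Cmod (sum2 (fun v => if inS v S then RtoC 0 else theta_term al be (0,t) (zc x P t) v) N)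
  <= exp (PI / 2) * exp (2 * PI * mu) * exp (- (2 * PI * t * mu)) * (CF0 * CF0).
Proof.
  intros Ht Hmu HS.
  set (D := exp (PI / 2) * exp (2 * PI * mu) * exp (- (2 * PI * t * mu))).
  assert (HD : 0 < D) by (unfold D; repeat apply Rmult_lt_0_compat; apply exp_pos).
  eapply Rle_trans.
  { apply Rmult_le_compat_l; [left; apply exp_pos| apply Cmod_sum2]. }
  set (k := exp (- (2 * PI * t * Qr P))).
  set (a := fun i : nat => exp (- (PI * Rabs (INR i + (fst al - INR N - fst P))))).
  set (b := fun j : nat => exp (- (PI * Rabs (INR j + (snd al - INR N - snd P))))).
  apply Rle_trans with (D * (sum_n a (2 * N) * sum_n b (2 * N))).
  - change (k * sum_n (fun i => sum_n (fun j => Cmod (if inS (Z.of_nat i - Z.of_nat N, Z.of_nat j - Z.of_nat N)%Z S then RtoC 0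
                 else theta_term al be (0, t) (zc x P t) (Z.of_nat i - Z.of_nat N, Z.of_nat j - Z.of_nat N)%Z)) (2 * N)) (2 * N)
       <= D * (sum_n a (2 * N) * sum_n b (2 * N))).
    assert (ER : D * (sum_n a (2 * N) * sum_n b (2 * N)) =
       sum_n (fun i => sum_n (fun j => D * (a i * b j)) (2 * N)) (2 * N)).
    { rewrite <- (sum_n_mult_r (K := R_Ring)).
      change (D * ?z) with (mult D z : R).
      rewrite <- (sum_n_mult_l (K := R_Ring)).
      apply sum_n_ext. intros i.
      change (mult ?u ?w) with (u * w).
      change (sum_n b (2 * N)) with (sum_n (G := R_AbelianMonoid) b (2 * N)).
      rewrite <- (sum_n_mult_l (K := R_Ring)).
      change (D * ?z) with (mult D z : R).
      rewrite <- (sum_n_mult_l (K := R_Ring)).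
      apply sum_n_ext. intros j. reflexivity. }
    rewrite ER. clear ER.
    change (k * ?z) with (mult k z : R).
    rewrite <- (sum_n_mult_l (K := R_Ring)).
    apply sum_n_le_R. intros i.
    change (mult ?u ?w) with (u * w).
    change (k * ?z) with (mult k z : R).
    rewrite <- (sum_n_mult_l (K := R_Ring)).
    apply sum_n_le_R. intros j.
    change (mult ?u ?w) with (u * w).
    pose proof (term_bound al be P x t mu S (Z.of_nat i - Z.of_nat N, Z.of_nat j - Z.of_nat N)%Z Ht Hmu HS) as H.
    unfold wv in H; simpl in H. rewrite !wv_shift in H.
    unfold a, b. fold k D in H. lra.
  - assert (0 <= sum_n a (2 * N)) .
    { apply Rle_trans with (sum_n (fun _ => 0) (2 * N)).
      - rewrite sum_n_const. lra.
      - apply sum_n_le_R. intros; left; apply exp_pos. }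
    assert (0 <= sum_n b (2 * N)) .
    { apply Rle_trans with (sum_n (fun _ => 0) (2 * N)).
      - rewrite sum_n_const. lra.
      - apply sum_n_le_R. intros; left; apply exp_pos. }
    pose proof (sum1D_bound (fst al - INR N - fst P) (2 * N)).
    pose proof (sum1D_bound (snd al - INR N - snd P) (2 * N)).
    fold a b in H1, H2.
    apply Rmult_le_compat_l; [lra|]. apply Rmult_le_compat; auto.
Qed.

Lemma Rabs_le_inv x T : Rabs x <= T -> -T <= x <= T.
Proof. intros. pose proof (Rle_abs x). pose proof (Rle_abs (- x)). rewrite Rabs_Ropp in H1. lra. Qed.

Lemma fst_Cminus a b : fst (Cminus a b) = fst a - fst b.
Proof. destruct a, b; unfold Cminus, Cplus, Copp; simpl; ring. Qed.
Lemma snd_Cminus a b : snd (Cminus a b) = snd a - snd b.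
Proof. destruct a, b; unfold Cminus, Cplus, Copp; simpl; ring. Qed.

Lemma im_le_Cmod z : Rabs (snd z) <= Cmod z.
Proof. eapply Rle_trans; [|apply Rmax_Cmod]. apply Rmax_r. Qed.

Lemma approx al be P x S mu t :
  1 <= t -> 0 <= mu -> NoDup S ->
  (forall s, In s S -> (-1 <= fst s <= 1)%Z /\ (-1 <= snd s <= 1)%Z) ->
  (forall v, ~ In v S -> mu <= Qr (wv al P v)) ->
  Cmod (Cminus (Cmult (RtoC (exp (- (2 * PI * t * Qr P)))) (theta al be (0, t) (zc x P t)))
               (mainsum (nterm al be P x t) S))
  <= KT * exp (2 * PI * mu) * exp (- (2 * PI * t * mu)).
Proof.
  intros Ht Hmu HND HB HS.
  set (k := exp (- (2 * PI * t * Qr P))).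
  assert (Hk : 0 < k) by apply exp_pos.
  set (f := theta_term al be (0, t) (zc x P t)).
  set (M := mainsum f S).
  set (D := exp (PI / 2) * exp (2 * PI * mu) * exp (- (2 * PI * t * mu)) * (CF0 * CF0)).
  set (T := D / k).
  assert (HR : forall N, (1 <= N)%nat ->
     Cmod (Cminus (theta_partial al be (0, t) (zc x P t) N) M) <= T).
  { intros N HN. rewrite theta_partial_sum2.
    rewrite (sum2_decomp _ S N HND).
    2:{ intros s Hs. destruct (HB s Hs). lia. }
    fold f M.
    replace (Cminus (Cplus M (sum2 (fun v => if inS v S then RtoC 0 else f v) N)) M)
      with (sum2 (fun v => if inS v S then RtoC 0 else f v) N) by ring.
    pose proof (rest_bound al be P x t mu S N Ht Hmu HS) as H. fold k f D in H.
    unfold T. apply (Rmult_le_reg_l k); auto. unfold Rdiv.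
    replace (k * (D * / k)) with D by (field; lra). auto. }
  assert (H1 : fst M - T <= fst (theta al be (0, t) (zc x P t)) <= fst M + T).
  { unfold theta; cbn [fst snd]. apply lim_bound. intros N HN.
    specialize (HR N HN). pose proof (re_le_Cmod (Cminus (theta_partial al be (0, t) (zc x P t) N) M)).
    unfold Re in H. rewrite fst_Cminus in H. apply Rabs_le_inv in H as []; unfold Re, Im; split; lra. }
  assert (H2 : snd M - T <= snd (theta al be (0, t) (zc x P t)) <= snd M + T).
  { unfold theta; cbn [fst snd]. apply lim_bound. intros N HN.
    specialize (HR N HN). pose proof (im_le_Cmod (Cminus (theta_partial al be (0, t) (zc x P t) N) M)).
    rewrite snd_Cminus in H. apply Rabs_le_inv in H as []; unfold Re, Im; split; lra. }
  assert (H3 : Cmod (Cminus (theta al be (0, t) (zc x P t)) M) <= 2 * T).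
  { apply Cmod_le_re_im; rewrite ?fst_Cminus, ?snd_Cminus; apply Rabs_le; lra. }
  rewrite <- (mainsum_scale (RtoC k) f (nterm al be P x t) S) by (intros; apply nterm_eq).
  fold M.
  replace (Cminus (Cmult (RtoC k) (theta al be (0, t) (zc x P t))) (Cmult (RtoC k) M))
    with (Cmult (RtoC k) (Cminus (theta al be (0, t) (zc x P t)) M)) by ring.
  rewrite Cmod_mult, Cmod_RtoC_nn by lra.
  apply Rle_trans with (k * (2 * T)). { apply Rmult_le_compat_l; lra. }
  apply Req_le. unfold T, D, KT. field. lra.
Qed.

Lemma zero_lemma (X : C) L r : 0 < r -> (forall t, 1 <= t -> Cmod X <= L * exp (- (r * t))) -> X = RtoC 0.
Proof.
  intros Hr H.
  destruct (Req_dec (Cmod X) 0) as [E|E]; [apply Cmod_eq_0; auto|].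
  exfalso. pose proof (Cmod_ge_0 X) as Hm.
  assert (Hm' : 0 < Cmod X) by lra.
  destruct (Rle_dec L 0) as [HL|HL].
  - specialize (H 1 (Rle_refl _)). pose proof (exp_pos (- (r * 1))). nra.
  - apply Rnot_le_lt in HL.
    set (m := Cmod X) in *.
    set (t := 1 + (Rabs (ln (L / m)) + 1) / r).
    assert (Ht : 1 <= t). { unfold t. pose proof (Rabs_pos (ln (L / m))).
      assert (0 <= (Rabs (ln (L / m)) + 1) / r) by (apply Rle_mult_inv_pos; lra). lra. }
    specialize (H t Ht).
    assert (Hrt : ln (L / m) < r * t).
    { unfold t. replace (r * (1 + (Rabs (ln (L / m)) + 1) / r)) with (r + Rabs (ln (L / m)) + 1) by (field; lra).
      pose proof (Rle_abs (ln (L / m))). lra. }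
    assert (exp (- (r * t)) < exp (- ln (L / m))) by (apply exp_increasing; lra).
    rewrite (exp_Ropp (ln (L / m))), exp_ln in H0 by (apply Rdiv_lt_0_compat; lra).
    assert (L * exp (- (r * t)) < L * / (L / m)) by (apply Rmult_lt_compat_l; lra).
    replace (L * / (L / m)) with m in H1 by (field; lra). lra.
Qed.

Definition qq (r t : R) : R := exp (- (2 * PI * t * r)).

Lemma qq_pos r t : 0 < qq r t.
Proof. apply exp_pos. Qed.

Lemma qq_mult a b t : qq a t * qq b t = qq (a + b) t.
Proof. unfold qq. rewrite <- exp_plus. f_equal. ring. Qed.

Lemma qq_le a b t : 1 <= t -> a <= b -> qq b t <= qq a t.
Proof. intros. unfold qq. apply exp_le. pose proof PI_RGT_0. 
  assert (0 <= 2 * PI * t * (b - a)) by (apply Rmult_le_pos; [apply Rmult_le_pos; [apply Rmult_le_pos|]|]; lra).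
  assert (2 * PI * t * (b - a) = 2 * PI * t * b - 2 * PI * t * a) by ring. lra. Qed.

Lemma qq_le1 a t : 1 <= t -> 0 <= a -> qq a t <= 1.
Proof. intros. unfold qq. apply exp_le1. pose proof PI_RGT_0.
  assert (0 <= 2 * PI * t * a) by (apply Rmult_le_pos; [apply Rmult_le_pos; [apply Rmult_le_pos|]|]; lra). lra. Qed.

Lemma zero_lemma_qq (X : C) L r : 0 < r -> (forall t, 1 <= t -> Cmod X <= L * qq r t) -> X = RtoC 0.
Proof. intros Hr H. apply (zero_lemma X L (2 * PI * r)).
  - pose proof PI_RGT_0. nra.
  - intros t Ht. specialize (H t Ht). unfold qq in H. replace (2 * PI * t * r) with (2 * PI * r * t) in H by ring. auto. Qed.

Definition Cpoly5 (A0 A1 A2 A3 A4 A5 x : C) : C :=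
  Cplus A0 (Cmult x (Cplus A1 (Cmult x (Cplus A2 (Cmult x (Cplus A3 (Cmult x (Cplus A4 (Cmult x A5))))))))).

Lemma Cmod_RtoC_qq r t : Cmod (RtoC (qq r t)) = qq r t.
Proof. apply Cmod_RtoC_nn. left; apply qq_pos. Qed.

Lemma tail_bound (A1 A2 A3 A4 A5 x : C) : Cmod x <= 1 ->
  Cmod (Cplus A1 (Cmult x (Cplus A2 (Cmult x (Cplus A3 (Cmult x (Cplus A4 (Cmult x A5)))))))) <=
  Cmod A1 + Cmod A2 + Cmod A3 + Cmod A4 + Cmod A5.
Proof.
  intros Hx. pose proof (Cmod_ge_0 x).
  eapply Rle_trans; [apply Cmod_triangle|]. rewrite Cmod_mult.
  eapply Rle_trans with (Cmod A1 + 1 * Cmod (Cplus A2 (Cmult x (Cplus A3 (Cmult x (Cplus A4 (Cmult x A5))))))).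
  { apply Rplus_le_compat_l. apply Rmult_le_compat_r; [apply Cmod_ge_0|auto]. }
  rewrite Rmult_1_l.
  eapply Rle_trans; [apply Rplus_le_compat_l; apply Cmod_triangle|]. rewrite Cmod_mult.
  eapply Rle_trans with (Cmod A1 + (Cmod A2 + 1 * Cmod (Cplus A3 (Cmult x (Cplus A4 (Cmult x A5)))))).
  { apply Rplus_le_compat_l. apply Rplus_le_compat_l. apply Rmult_le_compat_r; [apply Cmod_ge_0|auto]. }
  rewrite Rmult_1_l.
  eapply Rle_trans; [apply Rplus_le_compat_l; apply Rplus_le_compat_l; apply Cmod_triangle|]. rewrite Cmod_mult.
  eapply Rle_trans with (Cmod A1 + (Cmod A2 + (Cmod A3 + 1 * Cmod (Cplus A4 (Cmult x A5))))).
  { do 3 apply Rplus_le_compat_l. apply Rmult_le_compat_r; [apply Cmod_ge_0|auto]. }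
  rewrite Rmult_1_l.
  eapply Rle_trans; [do 3 apply Rplus_le_compat_l; apply Cmod_triangle|]. rewrite Cmod_mult.
  assert (Cmod x * Cmod A5 <= Cmod A5) by (pose proof (Cmod_ge_0 A5); nra).
  lra.
Qed.

Lemma h_step (A : C) (Rf : R -> C) K Sg r :
  0 < r <= 1 -> (forall t, 1 <= t -> Cmod (Rf t) <= Sg) ->
  (forall t, 1 <= t -> Cmod (Cplus A (Cmult (RtoC (qq 1 t)) (Rf t))) <= K * qq r t) -> A = RtoC 0.
Proof.
  intros Hr HR H. apply (zero_lemma_qq A (Rabs K + Sg) r); [lra|].
  intros t Ht. specialize (H t Ht). specialize (HR t Ht).
  replace A with (Cminus (Cplus A (Cmult (RtoC (qq 1 t)) (Rf t))) (Cmult (RtoC (qq 1 t)) (Rf t))) by ring.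
  unfold Cminus. eapply Rle_trans; [apply Cmod_triangle|]. rewrite Cmod_opp, Cmod_mult, Cmod_RtoC_qq.
  pose proof (qq_le r 1 t Ht (proj2 Hr)). pose proof (qq_pos r t). pose proof (qq_pos 1 t).
  pose proof (Rle_abs K). pose proof (Cmod_ge_0 (Rf t)).
  assert (K * qq r t <= Rabs K * qq r t) by (apply Rmult_le_compat_r; lra).
  assert (qq 1 t * Cmod (Rf t) <= qq r t * Sg) by (apply Rmult_le_compat; lra).
  lra.
Qed.

Lemma d_step (Rf : R -> C) K r :
  (forall t, 1 <= t -> Cmod (Cplus (RtoC 0) (Cmult (RtoC (qq 1 t)) (Rf t))) <= K * qq r t) ->
  (forall t, 1 <= t -> Cmod (Rf t) <= K * qq (r - 1) t).
Proof.
  intros H t Ht. specialize (H t Ht). rewrite Cplus_0_l, Cmod_mult, Cmod_RtoC_qq in H.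
  replace (qq r t) with (qq 1 t * qq (r - 1) t) in H by (rewrite qq_mult; f_equal; ring).
  pose proof (qq_pos 1 t).
  apply (Rmult_le_reg_l (qq 1 t)); auto.
  replace (qq 1 t * (K * qq (r - 1) t)) with (K * (qq 1 t * qq (r - 1) t)) by ring. lra.
Qed.

Lemma tl2 (a b x : C) : Cmod x <= 1 -> Cmod (Cplus a (Cmult x b)) <= Cmod a + Cmod b.
Proof. intros. eapply Rle_trans; [apply Cmod_triangle|]. rewrite Cmod_mult.
  pose proof (Cmod_ge_0 x). pose proof (Cmod_ge_0 b). nra. Qed.

Lemma Cmod_qq1 t : 1 <= t -> Cmod (RtoC (qq 1 t)) <= 1.
Proof. intros. rewrite Cmod_RtoC_qq. apply qq_le1; lra. Qed.

Ltac tlb := repeat (eapply Rle_trans; [apply tl2; apply Cmod_qq1; auto|]; apply Rplus_le_compat_l); apply Rle_refl.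

Lemma poly_zero A0 A1 A2 A3 A4 A5 K : 0 <= K ->
  (forall t, 1 <= t -> Cmod (Cpoly5 A0 A1 A2 A3 A4 A5 (RtoC (qq 1 t))) <= K * qq (5/2) t) ->
  A0 = RtoC 0 /\ A1 = RtoC 0 /\ A2 = RtoC 0.
Proof.
  intros HK H. unfold Cpoly5 in H.
  assert (E0 : A0 = RtoC 0).
  { eapply (h_step A0 (fun t => Cplus A1 (Cmult (RtoC (qq 1 t)) (Cplus A2 (Cmult (RtoC (qq 1 t)) (Cplus A3 (Cmult (RtoC (qq 1 t)) (Cplus A4 (Cmult (RtoC (qq 1 t)) A5)))))))) K (Cmod A1 + (Cmod A2 + (Cmod A3 + (Cmod A4 + Cmod A5)))) (5/2 - 3/2)); [lra| |].
    - intros t Ht. tlb.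
    - intros t Ht. replace (5/2 - 3/2) with 1 by field.
      eapply Rle_trans; [apply H; auto|]. 
      apply Rmult_le_compat_l; auto. apply qq_le; lra. }
  subst A0.
  pose proof (d_step _ K (5/2) H) as H1. replace (5/2 - 1) with (3/2) in H1 by field.
  assert (E1 : A1 = RtoC 0).
  { eapply (h_step A1 (fun t => Cplus A2 (Cmult (RtoC (qq 1 t)) (Cplus A3 (Cmult (RtoC (qq 1 t)) (Cplus A4 (Cmult (RtoC (qq 1 t)) A5)))))) K (Cmod A2 + (Cmod A3 + (Cmod A4 + Cmod A5))) 1); [lra| |].
    - intros t Ht. tlb.
    - intros t Ht. eapply Rle_trans; [apply H1; auto|].
      apply Rmult_le_compat_l; auto. apply qq_le; lra. }
  subst A1.
  pose proof (d_step _ K (3/2) H1) as H2. replace (3/2 - 1) with (1/2) in H2 by field.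
  assert (E2 : A2 = RtoC 0).
  { eapply (h_step A2 (fun t => Cplus A3 (Cmult (RtoC (qq 1 t)) (Cplus A4 (Cmult (RtoC (qq 1 t)) A5)))) K (Cmod A3 + (Cmod A4 + Cmod A5)) (1/2)); [lra| |].
    - intros t Ht. tlb.
    - intros t Ht. apply H2; auto. }
  auto.
Qed.

Lemma mle4 a b c d m : 0 <= a <= m -> 0 <= b <= m -> 0 <= c <= m -> 0 <= d <= m -> a * b * c * d <= m * m * m * m.
Proof. intros. repeat apply Rmult_le_compat; try lra; repeat apply Rmult_le_pos; lra. Qed.

Lemma Cmod_tri5 a b c d e : Cmod (Cplus a (Cplus b (Cplus c (Cplus d e)))) <= Cmod a + Cmod b + Cmod c + Cmod d + Cmod e.
Proof.
  pose proof (Cmod_triangle a (Cplus b (Cplus c (Cplus d e)))).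
  pose proof (Cmod_triangle b (Cplus c (Cplus d e))).
  pose proof (Cmod_triangle c (Cplus d e)).
  pose proof (Cmod_triangle d e). lra. Qed.

Lemma Cpow5_diff x y : Cmod (Cminus (Cpow5 x) (Cpow5 y)) <=
  5 * Cmod (Cminus x y) * ((Cmod y + Cmod (Cminus x y)) * (Cmod y + Cmod (Cminus x y)) * (Cmod y + Cmod (Cminus x y)) * (Cmod y + Cmod (Cminus x y))).
Proof.
  replace (Cminus (Cpow5 x) (Cpow5 y)) with
    (Cmult (Cminus x y) (Cplus (Cmult (Cmult (Cmult x x) x) x) (Cplus (Cmult (Cmult (Cmult x x) x) y)
       (Cplus (Cmult (Cmult (Cmult x x) y) y) (Cplus (Cmult (Cmult (Cmult x y) y) y) (Cmult (Cmult (Cmult y y) y) y))))))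
    by (unfold Cpow5; ring).
  rewrite Cmod_mult.
  set (m := Cmod y + Cmod (Cminus x y)).
  assert (Hx : 0 <= Cmod x <= m).
  { split; [apply Cmod_ge_0|]. unfold m. replace x with (Cplus y (Cminus x y)) at 1 by ring. apply Cmod_triangle. }
  assert (Hy : 0 <= Cmod y <= m). { split; [apply Cmod_ge_0|]. unfold m. pose proof (Cmod_ge_0 (Cminus x y)). lra. }
  assert (Hs : Cmod (Cplus (Cmult (Cmult (Cmult x x) x) x) (Cplus (Cmult (Cmult (Cmult x x) x) y)
       (Cplus (Cmult (Cmult (Cmult x x) y) y) (Cplus (Cmult (Cmult (Cmult x y) y) y) (Cmult (Cmult (Cmult y y) y) y))))) <= 5 * (m * m * m * m)).
  { eapply Rle_trans; [apply Cmod_tri5|]. rewrite !Cmod_mult.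
    pose proof (mle4 _ _ _ _ m Hx Hx Hx Hx). pose proof (mle4 _ _ _ _ m Hx Hx Hx Hy).
    pose proof (mle4 _ _ _ _ m Hx Hx Hy Hy). pose proof (mle4 _ _ _ _ m Hx Hy Hy Hy).
    pose proof (mle4 _ _ _ _ m Hy Hy Hy Hy). lra. }
  pose proof (Cmod_ge_0 (Cminus x y)). nra.
Qed.

Definition row5 (c : nat -> C) (F : nat -> C) : C :=
  Cplus (Cmult (c 0%nat) (Cpow5 (F 0%nat))) (Cplus (Cmult (c 1%nat) (Cpow5 (F 1%nat)))
  (Cplus (Cmult (c 2%nat) (Cpow5 (F 2%nat))) (Cplus (Cmult (c 3%nat) (Cpow5 (F 3%nat)))
   (Cmult (c 4%nat) (Cpow5 (F 4%nat)))))).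

Definition csum (c : nat -> C) : R :=
  Cmod (c 0%nat) + Cmod (c 1%nat) + Cmod (c 2%nat) + Cmod (c 3%nat) + Cmod (c 4%nat).

Lemma csum_nn c : 0 <= csum c.
Proof. unfold csum. pose proof (Cmod_ge_0 (c 0%nat)). pose proof (Cmod_ge_0 (c 1%nat)).
  pose proof (Cmod_ge_0 (c 2%nat)). pose proof (Cmod_ge_0 (c 3%nat)). pose proof (Cmod_ge_0 (c 4%nat)). lra. Qed.

Lemma row5_diff c F G E : (forall b, Cmod (Cminus (Cpow5 (F b)) (Cpow5 (G b))) <= E) ->
  Cmod (Cminus (row5 c F) (row5 c G)) <= csum c * E.
Proof.
  intros H. unfold row5, csum.
  match goal with |- Cmod ?z <= _ => replace z with
    (Cplus (Cmult (c 0%nat) (Cminus (Cpow5 (F 0%nat)) (Cpow5 (G 0%nat))))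
    (Cplus (Cmult (c 1%nat) (Cminus (Cpow5 (F 1%nat)) (Cpow5 (G 1%nat))))
    (Cplus (Cmult (c 2%nat) (Cminus (Cpow5 (F 2%nat)) (Cpow5 (G 2%nat))))
    (Cplus (Cmult (c 3%nat) (Cminus (Cpow5 (F 3%nat)) (Cpow5 (G 3%nat))))
           (Cmult (c 4%nat) (Cminus (Cpow5 (F 4%nat)) (Cpow5 (G 4%nat)))))))) by ring end.
  eapply Rle_trans; [apply Cmod_tri5|]. rewrite !Cmod_mult.
  pose proof (H 0%nat). pose proof (H 1%nat). pose proof (H 2%nat). pose proof (H 3%nat). pose proof (H 4%nat).
  pose proof (Cmod_ge_0 (c 0%nat)). pose proof (Cmod_ge_0 (c 1%nat)).
  pose proof (Cmod_ge_0 (c 2%nat)). pose proof (Cmod_ge_0 (c 3%nat)). pose proof (Cmod_ge_0 (c 4%nat)).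
  assert (forall u v, 0 <= u -> v <= E -> u * v <= u * E) by (intros; apply Rmult_le_compat_l; auto).
  pose proof (H10 _ _ H5 H0). pose proof (H10 _ _ H6 H1). pose proof (H10 _ _ H7 H2).
  pose proof (H10 _ _ H8 H3). pose proof (H10 _ _ H9 H4). nra.
Qed.

Lemma row5_bound c F E : (forall b, Cmod (Cpow5 (F b)) <= E) -> Cmod (row5 c F) <= csum c * E.
Proof.
  intros H. replace (row5 c F) with (Cminus (row5 c F) (row5 c (fun _ => RtoC 0))).
  - apply row5_diff. intros b. replace (Cminus (Cpow5 (F b)) (Cpow5 (RtoC 0))) with (Cpow5 (F b)); auto.
    unfold Cpow5; ring.
  - unfold row5, Cpow5. ring.
Qed.

Definition ss (b : nat) (phi : R) : C :=
  Cplus (cis (2 * PI * (2 * INR b / 5 + phi))) (cis (2 * PI * (- (2 * INR b / 5) - phi))).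
Definition sb (b : nat) (phi t : R) : C := Cplus (RtoC 1) (Cmult (RtoC (qq 1 t)) (ss b phi)).

Lemma ss_bound b phi : Cmod (ss b phi) <= 2.
Proof. unfold ss. eapply Rle_trans; [apply Cmod_triangle|]. rewrite !Cmod_cis. lra. Qed.

Lemma sb_bound b phi t : 1 <= t -> Cmod (sb b phi t) <= 3.
Proof. intros Ht. unfold sb. eapply Rle_trans; [apply Cmod_triangle|]. rewrite Cmod_mult, Cmod_RtoC_qq, Cmod_R, Rabs_R1.
  pose proof (ss_bound b phi). pose proof (qq_le1 1 t Ht). pose proof (qq_pos 1 t).
  assert (qq 1 t * Cmod (ss b phi) <= 1 * 2) by (apply Rmult_le_compat; try lra; apply Cmod_ge_0). lra. Qed.

Lemma diff_mono d D0 y M0 : 0 <= d <= D0 -> 0 <= y -> y + d <= M0 ->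
  5 * d * ((y + d) * (y + d) * (y + d) * (y + d)) <= 5 * D0 * (M0 * M0 * M0 * M0).
Proof. intros. assert (0 <= y + d <= M0) by lra.
  pose proof (mle4 _ _ _ _ _ H2 H2 H2 H2).
  assert (0 <= (y + d) * (y + d) * (y + d) * (y + d)) by (repeat apply Rmult_le_pos; lra).
  apply Rmult_le_compat; try lra. Qed.

Lemma Cpow5_Cmod x : Cmod (Cpow5 x) = Cmod x * Cmod x * Cmod x * Cmod x * Cmod x.
Proof. unfold Cpow5. rewrite !Cmod_mult. ring. Qed.

Lemma p4 x : x * x * x * x = x ^ 4.
Proof. ring. Qed.

Lemma self_row (c : nat -> C) (F M : nat -> C) K t : 0 <= K -> 1 <= t ->
  (forall b, Cmod (Cminus (F b) (M b)) <= K * qq 3 t) -> (forall b, Cmod (M b) <= 3) ->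
  Cmod (Cminus (row5 c F) (row5 c M)) <= csum c * (5 * K * (3 + K) ^ 4) * qq (5/2) t.
Proof.
  intros HK Ht HF HM.
  replace (csum c * (5 * K * (3 + K) ^ 4) * qq (5/2) t) with
    (csum c * (5 * (K * qq (5/2) t) * ((3 + K) * (3 + K) * (3 + K) * (3 + K)))) by ring.
  apply row5_diff. intros b.
  eapply Rle_trans; [apply Cpow5_diff|].
  pose proof (qq_le (5/2) 3 t Ht ltac:(lra)). pose proof (qq_le1 3 t Ht ltac:(lra)). pose proof (qq_pos 3 t).
  specialize (HF b). specialize (HM b). pose proof (Cmod_ge_0 (Cminus (F b) (M b))). pose proof (Cmod_ge_0 (M b)).
  apply diff_mono; auto.
  - split; auto. eapply Rle_trans; [apply HF|]. apply Rmult_le_compat_l; auto.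
  - assert (K * qq 3 t <= K * 1) by (apply Rmult_le_compat_l; auto). lra.
Qed.

Lemma pair_row (c : nat -> C) (F Z : nat -> C) K t : 0 <= K -> 1 <= t ->
  (forall b, Cmod (Cminus (F b) (Cmult (RtoC (qq (2/5) t)) (Z b))) <= K * qq 1 t) -> (forall b, Cmod (Z b) <= 2) ->
  Cmod (Cminus (row5 c F) (row5 c (fun b => Cmult (RtoC (qq (2/5) t)) (Z b)))) <= csum c * (5 * K * (2 + K) ^ 4) * qq (5/2) t.
Proof.
  intros HK Ht HF HZ.
  set (M0 := (2 + K) * qq (2/5) t).
  assert (E : 5 * (K * qq 1 t) * (M0 * M0 * M0 * M0) <= 5 * K * (2 + K) ^ 4 * qq (5/2) t).
  { unfold M0. replace (5 * (K * qq 1 t) * ((2 + K) * qq (2 / 5) t * ((2 + K) * qq (2 / 5) t) * ((2 + K) * qq (2 / 5) t) * ((2 + K) * qq (2 / 5) t)))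
     with (5 * K * (2 + K) ^ 4 * (qq 1 t * qq (2/5) t * qq (2/5) t * qq (2/5) t * qq (2/5) t)) by ring.
    rewrite !qq_mult. apply Rmult_le_compat_l.
    - apply Rmult_le_pos; [lra|]. apply pow_le; lra.
    - apply qq_le; lra. }
  eapply Rle_trans.
  2:{ replace (csum c * (5 * K * (2 + K) ^ 4) * qq (5 / 2) t) with (csum c * (5 * K * (2 + K) ^ 4 * qq (5 / 2) t)) by ring.
      apply Rmult_le_compat_l; [apply csum_nn| apply E]. }
  apply row5_diff. intros b.
  eapply Rle_trans; [apply Cpow5_diff|].
  specialize (HF b). specialize (HZ b).
  pose proof (Cmod_ge_0 (Cminus (F b) (Cmult (RtoC (qq (2/5) t)) (Z b)))).
  pose proof (qq_le (2/5) 1 t Ht ltac:(lra)). pose proof (qq_pos 1 t). pose proof (qq_pos (2/5) t).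
  apply diff_mono; auto.
  - apply Cmod_ge_0.
  - rewrite Cmod_mult, Cmod_RtoC_qq. unfold M0.
    assert (qq (2/5) t * Cmod (Z b) <= qq (2/5) t * 2) by (apply Rmult_le_compat_l; lra).
    assert (K * qq 1 t <= K * qq (2/5) t) by (apply Rmult_le_compat_l; lra). nra.
Qed.

Lemma none_row (c : nat -> C) (F : nat -> C) K t : 0 <= K -> 1 <= t ->
  (forall b, Cmod (F b) <= K * qq (1/2) t) ->
  Cmod (row5 c F) <= csum c * K ^ 5 * qq (5/2) t.
Proof.
  intros HK Ht HF. rewrite Rmult_assoc. apply row5_bound. intros b. rewrite Cpow5_Cmod.
  specialize (HF b). pose proof (Cmod_ge_0 (F b)). pose proof (qq_pos (1/2) t).
  replace (K ^ 5 * qq (5/2) t) with ((K * qq (1/2) t) * (K * qq (1/2) t) * (K * qq (1/2) t) * (K * qq (1/2) t) * (K * qq (1/2) t)).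
  - repeat apply Rmult_le_compat; try lra; repeat apply Rmult_le_pos; lra.
  - replace (5/2) with (1/2 + 1/2 + 1/2 + 1/2 + 1/2) by field. rewrite <- !qq_mult. ring.
Qed.

Definition Dsum (c : nat -> C) (f : nat -> C) : C :=
  Cplus (Cmult (c 0%nat) (f 0%nat)) (Cplus (Cmult (c 1%nat) (f 1%nat))
  (Cplus (Cmult (c 2%nat) (f 2%nat)) (Cplus (Cmult (c 3%nat) (f 3%nat)) (Cmult (c 4%nat) (f 4%nat))))).
Definition Dk (c : nat -> C) (phi : R) (k : nat) : C := Dsum c (fun b => Cpow (ss b phi) k).

Lemma Cpow5_RtoC_qq t : Cpow5 (RtoC (qq (2/5) t)) = RtoC (qq 2 t).
Proof. unfold Cpow5. rewrite <- !RtoC_mult. f_equal.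
  replace (qq 2 t) with (qq (2/5 + (2/5 + (2/5 + (2/5 + 2/5)))) t) by (f_equal; field).
  rewrite <- !qq_mult. ring. Qed.

Lemma Cmod_Cpow5_1 x : Cmod x = 1 -> Cmod (Cpow5 x) = 1.
Proof. intros. rewrite Cpow5_Cmod, H. ring. Qed.

Lemma GL (cs cp1 cp2 cn1 cn2 : nat -> C) (Fs Fp1 Fp2 Fn1 Fn2 : nat -> R -> R -> C)
  (Zp1 Zp2 : nat -> R -> C) (g : R -> C) (rho : C) (K phi : R) :
  0 <= K ->
  (forall t th, 1 <= t -> Cplus (row5 cs (fun b => Fs b t th)) (Cplus (row5 cp1 (fun b => Fp1 b t th))
      (Cplus (row5 cp2 (fun b => Fp2 b t th)) (Cplus (row5 cn1 (fun b => Fn1 b t th)) (row5 cn2 (fun b => Fn2 b t th))))) = RtoC 0) ->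
  (forall th, Cmod (g th) = 1) -> Cpow5 (g (1/2)) = Cmult rho (Cpow5 (g 0)) -> Cmod rho = 1 ->
  (forall b t th, 1 <= t -> Cmod (Cminus (Fs b t th) (Cmult (g th) (sb b phi t))) <= K * qq 3 t) ->
  (forall b t th, 1 <= t -> Cmod (Cminus (Fp1 b t th) (Cmult (RtoC (qq (2/5) t)) (Zp1 b th))) <= K * qq 1 t) ->
  (forall b th, Cmod (Zp1 b th) <= 2) -> (forall b, Cpow5 (Zp1 b (1/2)) = Copp (Cmult rho (Cpow5 (Zp1 b 0)))) ->
  (forall b t th, 1 <= t -> Cmod (Cminus (Fp2 b t th) (Cmult (RtoC (qq (2/5) t)) (Zp2 b th))) <= K * qq 1 t) ->
  (forall b th, Cmod (Zp2 b th) <= 2) -> (forall b, Cpow5 (Zp2 b (1/2)) = Copp (Cmult rho (Cpow5 (Zp2 b 0)))) ->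
  (forall b t th, 1 <= t -> Cmod (Fn1 b t th) <= K * qq (1/2) t) ->
  (forall b t th, 1 <= t -> Cmod (Fn2 b t th) <= K * qq (1/2) t) ->
  Dk cs phi 0 = RtoC 0 /\ Dk cs phi 1 = RtoC 0 /\ Dk cs phi 2 = RtoC 0.
Proof.
  intros HK H0 Hg Hg5 Hrho Hs Hp1 Hz1 Hr1 Hp2 Hz2 Hr2 Hn1 Hn2.
  set (C0 := csum cs * (5 * K * (3 + K) ^ 4) + csum cp1 * (5 * K * (2 + K) ^ 4) + csum cp2 * (5 * K * (2 + K) ^ 4)
     + csum cn1 * K ^ 5 + csum cn2 * K ^ 5).
  set (T := fun t => row5 cs (fun b => sb b phi t)).
  assert (HA : forall t th, 1 <= t -> Cmod (Cplus (Cmult (Cpow5 (g th)) (T t))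
     (Cmult (RtoC (qq 2 t)) (Cplus (row5 cp1 (fun b => Zp1 b th)) (row5 cp2 (fun b => Zp2 b th))))) <= C0 * qq (5/2) t).
  { intros t th Ht. specialize (H0 t th Ht).
    pose proof (self_row cs (fun b => Fs b t th) (fun b => Cmult (g th) (sb b phi t)) K t HK Ht
       (fun b => Hs b t th Ht)) as E1.
    assert (E1' : forall b, Cmod (Cmult (g th) (sb b phi t)) <= 3).
    { intros b. rewrite Cmod_mult, Hg, Rmult_1_l. apply sb_bound; auto. }
    specialize (E1 E1').
    pose proof (pair_row cp1 (fun b => Fp1 b t th) (fun b => Zp1 b th) K t HK Ht (fun b => Hp1 b t th Ht) (fun b => Hz1 b th)) as E2.
    pose proof (pair_row cp2 (fun b => Fp2 b t th) (fun b => Zp2 b th) K t HK Ht (fun b => Hp2 b t th Ht) (fun b => Hz2 b th)) as E3.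
    pose proof (none_row cn1 (fun b => Fn1 b t th) K t HK Ht (fun b => Hn1 b t th Ht)) as E4.
    pose proof (none_row cn2 (fun b => Fn2 b t th) K t HK Ht (fun b => Hn2 b t th Ht)) as E5.
    assert (Ms : row5 cs (fun b => Cmult (g th) (sb b phi t)) = Cmult (Cpow5 (g th)) (T t)).
    { unfold T, row5, Cpow5. ring. }
    assert (Mp1 : row5 cp1 (fun b => Cmult (RtoC (qq (2/5) t)) (Zp1 b th)) = Cmult (RtoC (qq 2 t)) (row5 cp1 (fun b => Zp1 b th))).
    { rewrite <- Cpow5_RtoC_qq. unfold row5, Cpow5. ring. }
    assert (Mp2 : row5 cp2 (fun b => Cmult (RtoC (qq (2/5) t)) (Zp2 b th)) = Cmult (RtoC (qq 2 t)) (row5 cp2 (fun b => Zp2 b th))).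
    { rewrite <- Cpow5_RtoC_qq. unfold row5, Cpow5. ring. }
    cbv beta in E1, E2, E3, E4, E5. rewrite Ms in E1. rewrite Mp1 in E2. rewrite Mp2 in E3.
    match goal with |- Cmod ?X <= _ => replace X with
      (Copp (Cplus (Cminus (row5 cs (fun b => Fs b t th)) (Cmult (Cpow5 (g th)) (T t)))
            (Cplus (Cminus (row5 cp1 (fun b => Fp1 b t th)) (Cmult (RtoC (qq 2 t)) (row5 cp1 (fun b => Zp1 b th))))
            (Cplus (Cminus (row5 cp2 (fun b => Fp2 b t th)) (Cmult (RtoC (qq 2 t)) (row5 cp2 (fun b => Zp2 b th))))
            (Cplus (row5 cn1 (fun b => Fn1 b t th)) (row5 cn2 (fun b => Fn2 b t th)))))))
    end.
    2:{ match type of H0 with ?L = _ => match goal with |- _ = ?X => transitivity (Cminus X L) end end.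
        - ring.
        - rewrite H0. ring. }
    rewrite Cmod_opp. eapply Rle_trans; [apply Cmod_tri5|].
    unfold C0. pose proof (qq_pos (5/2) t). lra. }
  assert (HT : forall t, 1 <= t -> Cmod (T t) <= C0 * qq (5/2) t).
  { intros t Ht. pose proof (HA t 0 Ht) as A0. pose proof (HA t (1/2) Ht) as A1.
    rewrite Hg5 in A1.
    assert (R1 : row5 cp1 (fun b => Zp1 b (1/2)) = Copp (Cmult rho (row5 cp1 (fun b => Zp1 b 0)))).
    { unfold row5. rewrite !Hr1. ring. }
    assert (R2 : row5 cp2 (fun b => Zp2 b (1/2)) = Copp (Cmult rho (row5 cp2 (fun b => Zp2 b 0)))).
    { unfold row5. rewrite !Hr2. ring. }
    rewrite R1, R2 in A1.
    set (X0 := Cplus (Cmult (Cpow5 (g 0)) (T t)) (Cmult (RtoC (qq 2 t)) (Cplus (row5 cp1 (fun b => Zp1 b 0)) (row5 cp2 (fun b => Zp2 b 0))))) in A0.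
    set (X1 := Cplus (Cmult (Cmult rho (Cpow5 (g 0))) (T t)) (Cmult (RtoC (qq 2 t))
       (Cplus (Copp (Cmult rho (row5 cp1 (fun b => Zp1 b 0)))) (Copp (Cmult rho (row5 cp2 (fun b => Zp2 b 0))))))) in A1.
    assert (EX : Cplus (Cmult rho X0) X1 = Cmult (RtoC 2) (Cmult rho (Cmult (Cpow5 (g 0)) (T t)))).
    { unfold X0, X1. ring. }
    assert (Cmod (Cplus (Cmult rho X0) X1) <= 2 * (C0 * qq (5/2) t)).
    { eapply Rle_trans; [apply Cmod_triangle|]. rewrite Cmod_mult, Hrho. lra. }
    rewrite EX, !Cmod_mult, Hrho, Cmod_Cpow5_1, Cmod_R, Rabs_pos_eq in H by (auto; lra).
    lra. }
  assert (EP : forall t, T t = Cpoly5 (Dk cs phi 0) (Cmult (RtoC 5) (Dk cs phi 1)) (Cmult (RtoC 10) (Dk cs phi 2))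
     (Cmult (RtoC 10) (Dk cs phi 3)) (Cmult (RtoC 5) (Dk cs phi 4)) (Dk cs phi 5) (RtoC (qq 1 t))).
  { intros t. unfold T, row5, Dk, Dsum, Cpoly5, sb, Cpow5. cbn [Cpow].
    ring. }
  assert (C0nn : 0 <= C0).
  { unfold C0. pose proof (csum_nn cs) as a1. pose proof (csum_nn cp1) as a2. pose proof (csum_nn cp2) as a3.
    pose proof (csum_nn cn1) as a4. pose proof (csum_nn cn2) as a5.
    assert (b1 : 0 <= 5 * K * (3 + K) ^ 4) by (apply Rmult_le_pos; [lra| apply pow_le; lra]).
    assert (b2 : 0 <= 5 * K * (2 + K) ^ 4) by (apply Rmult_le_pos; [lra| apply pow_le; lra]).
    assert (b3 : 0 <= K ^ 5) by (apply pow_le; lra).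
    assert (M : forall u v, 0 <= u -> 0 <= v -> 0 <= u * v) by (intros; apply Rmult_le_pos; auto).
    pose proof (M _ _ a1 b1). pose proof (M _ _ a2 b2). pose proof (M _ _ a3 b2).
    pose proof (M _ _ a4 b3). pose proof (M _ _ a5 b3). lra. }
  destruct (poly_zero _ _ _ _ _ _ C0 C0nn (fun t Ht => eq_ind_r (fun z => Cmod z <= C0 * qq (5/2) t) (HT t Ht) (eq_sym (EP t))))
    as [D0 [D1 D2]].
  split; [auto|split].
  - replace (Dk cs phi 1) with (Cmult (RtoC (/5)) (Cmult (RtoC 5) (Dk cs phi 1))).
    + rewrite D1. ring.
    + rewrite Cmult_assoc, <- RtoC_mult, Rinv_l by lra. ring.
  - replace (Dk cs phi 2) with (Cmult (RtoC (/10)) (Cmult (RtoC 10) (Dk cs phi 2))).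
    + rewrite D2. ring.
    + rewrite Cmult_assoc, <- RtoC_mult, Rinv_l by lra. ring.
Qed.

Lemma dft_final (z c0 c1 c2 c3 c4 : C) :
  (1 + z + z * z + z * z * z + z * z * z * z = 0)%C ->
  (Cpow z 0 * ((c0) + (c1) + (c2) + (c3) + (c4)) = 0)%C ->
  (Cpow z 0 * ((c0)) + Cpow z 2 * ((c1)) + Cpow z 4 * ((c2)) + Cpow z 6 * ((c3)) + Cpow z 8 * ((c4)) = 0)%C ->
  (Cpow z 2 * ((c4)) + Cpow z 4 * ((c3)) + Cpow z 6 * ((c2)) + Cpow z 8 * ((c1)) + Cpow z 10 * ((c0)) = 0)%C ->
  (Cpow z 0 * ((c0)) + Cpow z 4 * ((c1)) + Cpow z 8 * ((c2)) + Cpow z 12 * ((c3)) + Cpow z 16 * ((c4)) = 0)%C ->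
  (Cpow z 4 * ((c4)) + Cpow z 8 * ((c3)) + Cpow z 12 * ((c2)) + Cpow z 16 * ((c1)) + Cpow z 20 * ((c0)) = 0)%C ->
  c0 = 0 /\ c1 = 0 /\ c2 = 0 /\ c3 = 0 /\ c4 = 0.
Proof.
  intros HF H0 HA HB HC HD.
  assert (E0 : (c0 + c0 + c0 + c0 + c0 = 0)%C).
  { match type of H0 with (?X = _)%C => set (X0 := X) in H0 end.
    match type of HA with (?X = _)%C => set (XA := X) in HA end.
    match type of HB with (?X = _)%C => set (XB := X) in HB end.
    match type of HC with (?X = _)%C => set (XC := X) in HC end.
    match type of HD with (?X = _)%C => set (XD := X) in HD end.
    match type of HF with (?X = _)%C => set (XF := X) in HF end.
    assert (EQ : (c0 + c0 + c0 + c0 + c0 = X0 + Cpow z 0 * XD + Cpow z 0 * XA + Cpow z 0 * XB + Cpow z 0 * XC - XF * (Cpow z 0 * ((- (c0 + c0)) + (c1) + (c2) + (c3) + (c4)) + Cpow z 1 * ((c0 + c0) + (- (c1)) + (- (c2)) + (- (c3)) + (- (c4))) + Cpow z 2 * ((c1) + (c4)) + Cpow z 3 * ((- (c1)) + (- (c4))) + Cpow z 4 * ((c1) + (c2) + (c3) + (c4)) + Cpow z 5 * ((- (c0 + c0))) + Cpow z 6 * ((c0 + c0) + (- (c1)) + (- (c4))) + Cpow z 7 * ((c1) + (- (c2)) + (- (c3)) + (c4)) + Cpow z 8 * ((c2) + (c3)) + Cpow z 10 * ((- (c0))) + Cpow z 11 * ((c0) + (- (c1)) + (- (c4))) + Cpow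 z 12 * ((c1) + (c4)) + Cpow z 15 * ((- (c0))) + Cpow z 16 * ((c0))))%C).
    { unfold X0, XA, XB, XC, XD, XF. ring. }
    rewrite EQ, H0, HA, HB, HC, HD, HF. ring. }
  assert (E1 : (c1 + c1 + c1 + c1 + c1 = 0)%C).
  { match type of H0 with (?X = _)%C => set (X0 := X) in H0 end.
    match type of HA with (?X = _)%C => set (XA := X) in HA end.
    match type of HB with (?X = _)%C => set (XB := X) in HB end.
    match type of HC with (?X = _)%C => set (XC := X) in HC end.
    match type of HD with (?X = _)%C => set (XD := X) in HD end.
    match type of HF with (?X = _)%C => set (XF := X) in HF end.
    assert (EQ : (c1 + c1 + c1 + c1 + c1 = X0 + Cpow z 4 * XD + Cpow z 3 * XA + Cpow z 2 * XB + Cpow z 1 * XC - XF * (Cpow z 0 * ((c0) + (- (c1 + c1 + c1 + c1)) + (c2) + (c3) + (c4)) + Cpow z 1 * ((c1 + c1 + c1 + c1) + (- (c2)) + (- (c3)) + (- (c4))) + Cpow z 2 * ((- (c0))) + Cpow z 3 * ((c0)) + Cpow z 4 * ((- (c0)) + (c4)) + Cpow z 5 * ((c0) + (- (c1 + c1)) + (c2) + (c3)) + Cpow z 6 * ((c1 + c1) + (- (c2)) + (- (c4))) + Cpow z 7 * ((- (c0)) + (c2) + (- (c3))) + Cpow z 8 * ((c0) + (c4)) + Cpow z 9 * ((- (c0)) + (c3)) + Cpow z 10 * ((c0) + (- (c1))) + Cpow z 11 * ((c1) + (- (c2))) + Cpow z 12 * ((c2) + (- (c4))) + Cpow z 13 *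 ((c4)) + Cpow z 14 * ((- (c0))) + Cpow z 15 * ((c0) + (- (c1))) + Cpow z 16 * ((c1)) + Cpow z 19 * ((- (c0))) + Cpow z 20 * ((c0))))%C).
    { unfold X0, XA, XB, XC, XD, XF. ring. }
    rewrite EQ, H0, HA, HB, HC, HD, HF. ring. }
  assert (E2 : (c2 + c2 + c2 + c2 + c2 = 0)%C).
  { match type of H0 with (?X = _)%C => set (X0 := X) in H0 end.
    match type of HA with (?X = _)%C => set (XA := X) in HA end.
    match type of HB with (?X = _)%C => set (XB := X) in HB end.
    match type of HC with (?X = _)%C => set (XC := X) in HC end.
    match type of HD with (?X = _)%C => set (XD := X) in HD end.
    match type of HF with (?X = _)%C => set (XF := X) in HF end.
    assert (EQ : (c2 + c2 + c2 + c2 + c2 = X0 + Cpow z 8 * XD + Cpow z 6 * XA + Cpow z 4 * XB + Cpow z 2 * XC - XF * (Cpow z 0 * ((c0) + (c1) + (- (c2 + c2 + c2 + c2)) + (c3) + (c4)) + Cpow z 1 * ((- (c0)) + (- (c1)) + (c2 + c2 + c2 + c2) + (- (c3)) + (- (c4))) + Cpow z 2 * ((c0)) + Cpow z 3 * ((- (c0))) + Cpow z 5 * ((c0) + (c1) + (- (c2 + c2 + c2 + c2)) + (c3) + (c4)) + Cpow z 6 * ((c2 + c2 + c2 + c2) + (- (c3))) + Cpow z 7 * ((- (c1)) + (- (c4))) + Cpow z 8 * ((- (c0)) + (c1) + (c3)) + Cpow z 9 * ((- (c1)) + (- (c3))) + Cpow z 10 * ((c0) + (c1) + (- (c2)) +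 (c3) + (c4)) + Cpow z 11 * ((c2) + (- (c3))) + Cpow z 12 * ((c3)) + Cpow z 13 * ((- (c0)) + (- (c4))) + Cpow z 14 * ((c0) + (- (c1)) + (c4)) + Cpow z 15 * ((c1) + (- (c2))) + Cpow z 16 * ((c2)) + Cpow z 18 * ((- (c0))) + Cpow z 19 * ((c0) + (- (c1))) + Cpow z 20 * ((c1)) + Cpow z 23 * ((- (c0))) + Cpow z 24 * ((c0))))%C).
    { unfold X0, XA, XB, XC, XD, XF. ring. }
    rewrite EQ, H0, HA, HB, HC, HD, HF. ring. }
  assert (E3 : (c3 + c3 + c3 + c3 + c3 = 0)%C).
  { match type of H0 with (?X = _)%C => set (X0 := X) in H0 end.
    match type of HA with (?X = _)%C => set (XA := X) in HA end.
    match type of HB with (?X = _)%C => set (XB := X) in HB end.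
    match type of HC with (?X = _)%C => set (XC := X) in HC end.
    match type of HD with (?X = _)%C => set (XD := X) in HD end.
    match type of HF with (?X = _)%C => set (XF := X) in HF end.
    assert (EQ : (c3 + c3 + c3 + c3 + c3 = X0 + Cpow z 12 * XD + Cpow z 9 * XA + Cpow z 6 * XB + Cpow z 3 * XC - XF * (Cpow z 0 * ((c0) + (c1) + (c2) + (- (c3 + c3 + c3 + c3)) + (c4)) + Cpow z 1 * ((- (c0)) + (- (c1)) + (- (c2)) + (c3 + c3 + c3 + c3) + (- (c4))) + Cpow z 3 * ((c0)) + Cpow z 4 * ((- (c0))) + Cpow z 5 * ((c0) + (c1) + (c2) + (- (c3 + c3 + c3 + c3)) + (c4)) + Cpow z 6 * ((- (c0)) + (- (c1)) + (- (c2)) + (c3 + c3 + c3 + c3) + (- (c4))) + Cpow z 7 * ((c1)) + Cpow z 8 * ((c0) + (- (c1)) + (c4)) + Cpow z 9 * ((- (c4))) + Cpow z 10 * ((c1) + (c2) + (- (c3 + c3 + c3)) + (c4)) + Cpow z 11 * ((- (c0)) + (c3 + c3 + c3) + (- (c4))) + Cpow z 13 * ((c0) + (- (c1)) + (c4)) + Cpow z 14 * ((c1) + (- (c2)) + (- (c4))) + Cpow z 15 * ((c2) + (- (c3)) + (c4)) + Cpow z 16 * ((c3)) + Cpow z 17 * ((- (c0))) + Cpow z 18 * ((c0) + (- (c1))) + Cpow z 19 * ((c1) + (- (c2))) + Cpow z 20 * ((c2)) + Cpow z 22 * ((- (c0))) + Cpow z 23 * ((c0) + (- (c1))) + Cpow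 z 24 * ((c1)) + Cpow z 27 * ((- (c0))) + Cpow z 28 * ((c0))))%C).
    { unfold X0, XA, XB, XC, XD, XF. ring. }
    rewrite EQ, H0, HA, HB, HC, HD, HF. ring. }
  assert (E4 : (c4 + c4 + c4 + c4 + c4 = 0)%C).
  { match type of H0 with (?X = _)%C => set (X0 := X) in H0 end.
    match type of HA with (?X = _)%C => set (XA := X) in HA end.
    match type of HB with (?X = _)%C => set (XB := X) in HB end.
    match type of HC with (?X = _)%C => set (XC := X) in HC end.
    match type of HD with (?X = _)%C => set (XD := X) in HD end.
    match type of HF with (?X = _)%C => set (XF := X) in HF end.
    assert (EQ : (c4 + c4 + c4 + c4 + c4 = X0 + Cpow z 16 * XD + Cpow z 12 * XA + Cpow z 8 * XB + Cpow z 4 * XC - XF * (Cpow z 0 * ((c0) + (c1) + (c2) + (c3) + (- (c4 + c4 + c4 + c4))) + Cpow z 1 * ((- (c0)) + (- (c1)) + (- (c2)) + (- (c3)) + (c4 + c4 + c4 + c4)) + Cpow z 4 * ((c0)) + Cpow z 5 * ((c1) + (c2) + (c3) + (- (c4 + c4 + c4 + c4))) + Cpow z 6 * ((- (c0)) + (- (c1)) + (- (c2)) + (- (c3)) + (c4 + c4 + c4 + c4)) + Cpow z 8 * ((c1)) + Cpow z 9 * ((c0) + (- (c1))) + Cpow z 10 * ((c1) + (c2) + (c3) + (- (c4 + c4 + c4))) + Cpow z 11 * ((- (c0)) + (- (c1)) + (- (c2)) + (- (c3)) + (c4 + c4 + c4)) + Cpow z 12 * ((c0) + (c2) + (c3))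 + Cpow z 13 * ((- (c0)) + (c1) + (- (c2)) + (- (c3))) + Cpow z 14 * ((c0) + (c2)) + Cpow z 15 * ((c3) + (- (c4 + c4 + c4))) + Cpow z 16 * ((- (c0)) + (c4 + c4 + c4)) + Cpow z 17 * ((c0) + (- (c1))) + Cpow z 18 * ((c1) + (- (c2))) + Cpow z 19 * ((c2) + (- (c3))) + Cpow z 20 * ((c3)) + Cpow z 21 * ((- (c0))) + Cpow z 22 * ((c0) + (- (c1))) + Cpow z 23 * ((c1) + (- (c2))) + Cpow z 24 * ((c2)) + Cpow z 26 * ((- (c0))) + Cpow z 27 * ((c0) + (- (c1))) + Cpow z 28 * ((c1)) + Cpow z 31 * ((- (c0))) + Cpow z 32 * ((c0))))%C).
    { unfold X0, XA, XB, XC, XD, XF. ring. }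
    rewrite EQ, H0, HA, HB, HC, HD, HF. ring. }
  assert (F0 : c0 = 0%C) by (replace c0 with (/ 5 * (c0 + c0 + c0 + c0 + c0))%C by field; rewrite E0; ring).
  assert (F1 : c1 = 0%C) by (replace c1 with (/ 5 * (c1 + c1 + c1 + c1 + c1))%C by field; rewrite E1; ring).
  assert (F2 : c2 = 0%C) by (replace c2 with (/ 5 * (c2 + c2 + c2 + c2 + c2))%C by field; rewrite E2; ring).
  assert (F3 : c3 = 0%C) by (replace c3 with (/ 5 * (c3 + c3 + c3 + c3 + c3))%C by field; rewrite E3; ring).
  assert (F4 : c4 = 0%C) by (replace c4 with (/ 5 * (c4 + c4 + c4 + c4 + c4))%C by field; rewrite E4; ring).
  auto.
Qed.

Definition zz : C := cis (2 * PI / 5).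

Lemma cis_nat m : cis (2 * PI * (INR m / 5)) = Cpow zz m.
Proof.
  induction m.
  - simpl. unfold cis. replace (2 * PI * (0 / 5)) with 0 by field. rewrite cos_0, sin_0. reflexivity.
  - simpl Cpow. rewrite <- IHm. unfold zz. rewrite cis_add. f_equal. rewrite S_INR. field.
Qed.

Lemma cis_period x : cis (x + 2 * PI * 2) = cis x.
Proof. unfold cis. replace (x + 2 * PI * 2) with (x + 2 * INR 2 * PI) by (simpl; ring).
  rewrite cos_period, sin_period. reflexivity. Qed.

Lemma ss_form b phi : (b <= 5)%nat ->
  ss b phi = Cplus (Cmult (Cpow zz (2 * b)) (cis (2 * PI * phi))) (Cmult (Cpow zz (10 - 2 * b)) (cis (- (2 * PI * phi)))).
Proof.
  intros Hb. unfold ss. rewrite <- !cis_nat, !cis_add. f_equal.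
  - f_equal. rewrite mult_INR. simpl (INR 2). field.
  - rewrite <- cis_period. f_equal. rewrite minus_INR by lia. rewrite mult_INR.
    replace (INR 10) with 10 by (simpl; ring). simpl (INR 2). field.
Qed.

Definition Ci : C := (0, 1).
Lemma Ci_sq : Cmult Ci Ci = Copp (RtoC 1).
Proof. unfold Ci, Cmult, Copp, RtoC; simpl. f_equal; ring. Qed.

Lemma cis_zero : cis 0 = RtoC 1.
Proof. unfold cis. rewrite cos_0, sin_0. reflexivity. Qed.
Lemma cis_PI2 : cis (PI / 2) = Ci.
Proof. unfold cis. rewrite cos_PI2, sin_PI2. reflexivity. Qed.
Lemma cis_mPI2 : cis (- (PI / 2)) = Copp Ci.
Proof. unfold cis. rewrite cos_neg, sin_neg, cos_PI2, sin_PI2. unfold Ci, Copp; simpl. f_equal; ring. Qed.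

Lemma zz_Phi : Cplus (Cplus (Cplus (Cplus (RtoC 1) zz) (Cmult zz zz)) (Cmult (Cmult zz zz) zz)) (Cmult (Cmult (Cmult zz zz) zz) zz) = RtoC 0.
Proof.
  assert (H5 : Cpow zz 5 = RtoC 1).
  { rewrite <- cis_nat. replace (2 * PI * (INR 5 / 5)) with (0 + 2 * PI * 2 - 2 * PI) by (simpl; field).
    unfold cis. replace (0 + 2 * PI * 2 - 2 * PI) with (2 * PI) by ring. rewrite cos_2PI, sin_2PI. reflexivity. }
  assert (Hn : Cminus zz (RtoC 1) <> RtoC 0).
  { intros E. assert (snd (Cminus zz (RtoC 1)) = 0) by (rewrite E; reflexivity).
    unfold zz, cis, Cminus, Cplus, Copp, RtoC in H; simpl in H.
    assert (0 < sin (2 * PI / 5)) by (apply sin_gt_0; pose proof PI_RGT_0; lra). lra. }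
  set (P := Cplus (Cplus (Cplus (Cplus (RtoC 1) zz) (Cmult zz zz)) (Cmult (Cmult zz zz) zz)) (Cmult (Cmult (Cmult zz zz) zz) zz)).
  assert (E : Cmult (Cminus zz (RtoC 1)) P = RtoC 0).
  { transitivity (Cminus (Cpow zz 5) (RtoC 1)). { unfold P. simpl Cpow. ring. } rewrite H5. ring. }
  replace P with (Cmult (Cinv (Cminus zz (RtoC 1))) (Cmult (Cminus zz (RtoC 1)) P)) by (field; auto).
  rewrite E. ring.
Qed.

Lemma final_alg (c : nat -> C) :
  Dk c 0 0 = RtoC 0 -> Dk c 0 1 = RtoC 0 -> Dk c (1/4) 1 = RtoC 0 -> Dk c 0 2 = RtoC 0 -> Dk c (1/8) 2 = RtoC 0 ->
  forall b, (b <= 4)%nat -> c b = RtoC 0.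
Proof.
  intros D0 D01 D41 D02 D82.
  unfold Dk, Dsum in *. rewrite !ss_form in D0, D01, D41, D02, D82 by lia.
  replace (2 * PI * 0) with 0 in D01, D02 by ring. replace (- 0) with 0 in D01, D02 by ring.
  rewrite cis_zero in D01, D02.
  replace (2 * PI * (1/4)) with (PI / 2) in D41 by field. rewrite cis_PI2, cis_mPI2 in D41.
  set (u := cis (2 * PI * (1 / 8))) in D82. set (v := cis (- (2 * PI * (1 / 8)))) in D82.
  assert (Huu : Cmult u u = Ci). { unfold u. rewrite cis_add, <- cis_PI2. f_equal. field. }
  assert (Hvv : Cmult v v = Copp Ci). { unfold v. rewrite cis_add, <- cis_mPI2. f_equal. field. }
  assert (Huv : Cmult u v = RtoC 1). { unfold u, v. rewrite cis_add, <- cis_zero. f_equal. ring. }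
  cbn [Cpow Nat.mul Nat.add Nat.sub] in D0, D01, D41, D02, D82.
  set (c0 := c 0%nat) in *. set (c1 := c 1%nat) in *. set (c2 := c 2%nat) in *. set (c3 := c 3%nat) in *. set (c4 := c 4%nat) in *.
  set (z := zz) in *.
  set (e0 := (Cpow z 0 * (c0 + c1 + c2 + c3 + c4))%C).
  set (eA := (Cpow z 0 * c0 + Cpow z 2 * c1 + Cpow z 4 * c2 + Cpow z 6 * c3 + Cpow z 8 * c4)%C).
  set (eB := (Cpow z 2 * c4 + Cpow z 4 * c3 + Cpow z 6 * c2 + Cpow z 8 * c1 + Cpow z 10 * c0)%C).
  set (eC := (Cpow z 0 * c0 + Cpow z 4 * c1 + Cpow z 8 * c2 + Cpow z 12 * c3 + Cpow z 16 * c4)%C).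
  set (eD := (Cpow z 4 * c4 + Cpow z 8 * c3 + Cpow z 12 * c2 + Cpow z 16 * c1 + Cpow z 20 * c0)%C).
  assert (H0 : e0 = RtoC 0). { rewrite <- D0. unfold e0. cbn [Cpow]. ring. }
  assert (HAB : Cplus eA eB = RtoC 0). { rewrite <- D01. unfold eA, eB. cbn [Cpow]. ring. }
  assert (HAB' : Cmult Ci (Cminus eA eB) = RtoC 0). { rewrite <- D41. unfold eA, eB. cbn [Cpow]. ring. }
  assert (HCD : Cplus (Cplus eC eD) (Cmult (Cmult (RtoC 2) (Cpow z 10)) e0) = RtoC 0).
  { rewrite <- D02. unfold eC, eD, e0. cbn [Cpow]. ring. }
  assert (HCD' : Cplus (Cplus (Cmult (Cmult u u) eC) (Cmult (Cmult v v) eD)) (Cmult (Cmult (RtoC 2) (Cpow z 10)) (Cmult (Cmult u v) e0)) = RtoC 0).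
  { rewrite <- D82. unfold eC, eD, e0. cbn [Cpow]. ring. }
  rewrite Huu, Hvv, Huv, H0 in HCD'. rewrite H0 in HCD.
  assert (EAB : Cminus eA eB = RtoC 0).
  { replace (Cminus eA eB) with (Copp (Cmult Ci (Cmult Ci (Cminus eA eB)))) by (rewrite Cmult_assoc, Ci_sq; ring).
    rewrite HAB'. ring. }
  assert (EA : eA = RtoC 0). { replace eA with (Cmult (RtoC (/2)) (Cplus (Cplus eA eB) (Cminus eA eB))).
    - rewrite HAB, EAB. ring.
    - transitivity (Cmult (RtoC (/2 * 2)) eA). + rewrite RtoC_mult. ring. + rewrite Rinv_l by lra. ring. }
  assert (EB : eB = RtoC 0). { replace eB with (Cminus (Cplus eA eB) eA) by ring. rewrite HAB, EA. ring. }
  assert (ECD' : Cmult Ci (Cminus eC eD) = RtoC 0). { rewrite <- HCD'. ring. }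
  assert (ECD : Cplus eC eD = RtoC 0). { rewrite <- HCD. ring. }
  assert (ECmD : Cminus eC eD = RtoC 0).
  { replace (Cminus eC eD) with (Copp (Cmult Ci (Cmult Ci (Cminus eC eD)))) by (rewrite Cmult_assoc, Ci_sq; ring).
    rewrite ECD'. ring. }
  assert (EC : eC = RtoC 0). { replace eC with (Cmult (RtoC (/2)) (Cplus (Cplus eC eD) (Cminus eC eD))).
    - rewrite ECD, ECmD. ring.
    - transitivity (Cmult (RtoC (/2 * 2)) eC). + rewrite RtoC_mult. ring. + rewrite Rinv_l by lra. ring. }
  assert (ED : eD = RtoC 0). { replace eD with (Cminus (Cplus eC eD) eC) by ring. rewrite ECD, EC. ring. }
  assert (HF : (1 + z + z * z + z * z * z + z * z * z * z = 0)%C) by (apply zz_Phi).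
  destruct (dft_final z c0 c1 c2 c3 c4 HF H0 EA EB EC ED) as [F0 [F1 [F2 [F3 F4]]]].
  intros b Hb. destruct b as [|[|[|[|[|b]]]]]; auto; lia.
Qed.

Definition xv (phi th : R) : R * R := ((8 * phi - th) / 15, (2 * th - phi) / 15).

Lemma Br_xv p phi th : Br p (xv phi th) = fst p * phi + snd p * th.
Proof. unfold Br, xv; simpl. field. Qed.

Definition Th (a0 a b : nat) (phi t th : R) : C :=
  Cmult (RtoC (exp (- (2 * PI * t * Qr (alpha_of a0)))))
        (theta (alpha_of a) (beta_of b) (0, t) (zc (xv phi th) (alpha_of a0) t)).

Definition rowa (c : nat -> nat -> C) (a0 a : nat) (phi t th : R) : C :=
  row5 (c a) (fun b => Th a0 a b phi t th).

Lemma total (c : nat -> nat -> C) :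
  (forall (tau : C) (z : C2), 0 < Im tau ->
       sum_n (fun a => sum_n (fun b =>
         Cmult (c a b) (Cpow5 (theta (alpha_of a) (beta_of b) tau z))) 4) 4
       = RtoC 0) ->
  forall a0 phi t th, 1 <= t ->
  Cplus (rowa c a0 0 phi t th) (Cplus (rowa c a0 1 phi t th) (Cplus (rowa c a0 2 phi t th)
    (Cplus (rowa c a0 3 phi t th) (rowa c a0 4 phi t th)))) = RtoC 0.
Proof.
  intros H a0 phi t th Ht.
  specialize (H (0, t) (zc (xv phi th) (alpha_of a0) t) ltac:(simpl; lra)).
  rewrite !sum_Sn, !sum_O in H. cbv beta in H. rewrite !sum_Sn, !sum_O in H. change plus with Cplus in H.
  set (k := RtoC (exp (- (2 * PI * t * Qr (alpha_of a0))))).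
  match type of H with ?L = _ =>
    transitivity (Cmult (Cpow5 k) L) end.
  - unfold rowa, row5, Th. fold k. unfold Cpow5. ring.
  - rewrite H. ring.
Qed.

Lemma Qr_decomp w1 w2 : Qr (w1, w2) = (w1 + w2 / 2) ^ 2 + 15 / 4 * w2 ^ 2.
Proof. unfold Qr; simpl. field. Qed.

Lemma Zcases (x : Z) : (x <= -2 \/ x = -1 \/ x = 0 \/ x = 1 \/ x >= 2)%Z.
Proof. lia. Qed.

Lemma sq_lb a y : 0 <= a -> (a <= y \/ y <= - a) -> a * a <= y ^ 2.
Proof. intros H [H1|H1]; nra. Qed.

Definition Sself : list (Z * Z) := ((0,0) :: (1,0) :: (-1,0) :: nil)%Z.

Lemma self_lattice al v : ~ In v Sself -> 3 <= Qr (wv al al v).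
Proof.
  intros Hn. destruct v as [v1 v2].
  replace (wv al al (v1, v2)) with (IZR v1, IZR v2) by (unfold wv; simpl; f_equal; ring).
  rewrite Qr_decomp.
  destruct (Z.eq_dec v2 0) as [E|E].
  - subst. assert (Hv : (v1 <= -2 \/ v1 >= 2)%Z).
    { destruct (Zcases v1) as [h|[h|[h|[h|h]]]]; subst; auto; exfalso; apply Hn; simpl; auto. }
    assert (Hv' : 2 <= IZR v1 \/ IZR v1 <= -2).
    { destruct Hv; [right; apply IZR_le in H; auto | left; apply Z.ge_le in H; apply IZR_le in H; auto]. }
    pose proof (sq_lb 2 (IZR v1 + 0 / 2) ltac:(lra) ltac:(lra)).
    pose proof (pow2_ge_0 (IZR 0)). lra.
  - assert (Hv' : 1 <= IZR v2 \/ IZR v2 <= -1).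
    { destruct (Z_le_gt_dec v2 (-1)); [right; apply IZR_le in l; auto| left; apply IZR_le; lia]. }
    pose proof (sq_lb 1 (IZR v2) ltac:(lra) ltac:(lra)).
    pose proof (pow2_ge_0 (IZR v1 + IZR v2 / 2)). lra.
Qed.

Definition gph (al : R * R) (phi th : R) : C := cis (2 * PI * (fst al * phi + snd al * th)).

Lemma self_main al b phi t th :
  mainsum (nterm al (beta_of b) al (xv phi th) t) Sself = Cmult (gph al phi th) (sb b phi t).
Proof.
  unfold mainsum, Sself, nterm, sb, ss, gph. simpl fold_right. rewrite !Br_xv.
  replace (Qr (wv al al (0, 0)%Z)) with 0 by (unfold Qr, wv; simpl; ring).
  replace (Qr (wv al al (1, 0)%Z)) with 1 by (unfold Qr, wv; simpl; ring).
  replace (Qr (wv al al (-1, 0)%Z)) with 1 by (unfold Qr, wv; simpl; ring).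
  replace (exp (- (2 * PI * t * 0))) with 1 by (replace (- (2 * PI * t * 0)) with 0 by ring; rewrite exp_0; auto).
  fold (qq 1 t).
  unfold beta_of, vR, pv, Br; simpl fst; simpl snd.
  replace (cis (2 * PI * (2 * (INR b / 5) * 0 + INR b / 5 * 0 + 0 * 0 + 8 * 0 * 0 + ((fst al + 0) * phi + (snd al + 0) * th))))
    with (cis (2 * PI * (fst al * phi + snd al * th))) by (f_equal; ring).
  replace (cis (2 * PI * (2 * (INR b / 5) * 1 + INR b / 5 * 0 + 0 * 1 + 8 * 0 * 0 + ((fst al + 1) * phi + (snd al + 0) * th))))
    with (Cmult (cis (2 * PI * (fst al * phi + snd al * th))) (cis (2 * PI * (2 * INR b / 5 + phi))))
    by (rewrite cis_add; f_equal; field).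
  replace (cis (2 * PI * (2 * (INR b / 5) * -1 + INR b / 5 * 0 + 0 * -1 + 8 * 0 * 0 + ((fst al + -1) * phi + (snd al + 0) * th))))
    with (Cmult (cis (2 * PI * (fst al * phi + snd al * th))) (cis (2 * PI * (- (2 * INR b / 5) - phi))))
    by (rewrite cis_add; f_equal; field).
  ring.
Qed.

Lemma NoDup_Sself : NoDup Sself.
Proof. unfold Sself. repeat constructor; simpl; intuition discriminate. Qed.

Lemma Hs_lemma a0 b phi t th : 1 <= t ->
  Cmod (Cminus (Th a0 a0 b phi t th) (Cmult (gph (alpha_of a0) phi th) (sb b phi t))) <= KT * exp (2 * PI * 3) * qq 3 t.
Proof.
  intros Ht. rewrite <- self_main. unfold Th. apply approx; auto; try lra.
  - apply NoDup_Sself.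
  - intros s Hs. unfold Sself in Hs. simpl in Hs. destruct Hs as [<-|[<-|[<-|[]]]]; simpl; lia.
  - intros v Hv. apply self_lattice; auto.
Qed.

Lemma pair_lattice (c1 c2 : R) (k s2 : Z) (eps : R) : (eps = 1/5 \/ eps = -1/5) ->
  c2 + IZR s2 = eps -> c1 + IZR k + eps / 2 = - 1 / 2 ->
  forall v1 v2, ~ In (v1, v2) ((k, s2) :: (k + 1, s2) :: nil)%Z -> 1 <= Qr (c1 + IZR v1, c2 + IZR v2).
Proof.
  intros He H2 H1 v1 v2 Hn. rewrite Qr_decomp.
  destruct (Z.eq_dec v2 s2) as [E|E].
  - subst. assert (Hv : (v1 <= k - 1 \/ v1 >= k + 2)%Z).
    { destruct (Z_le_gt_dec v1 (k - 1)); auto. destruct (Z_le_gt_dec (k + 2) v1); [right; lia|].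
      exfalso. apply Hn. assert (v1 = k \/ v1 = k + 1)%Z as [->| ->] by lia; simpl; auto. }
    assert (Hv' : IZR v1 <= IZR k - 1 \/ IZR k + 2 <= IZR v1).
    { destruct Hv as [h|h]; [left | right].
      - apply IZR_le in h. rewrite minus_IZR in h. auto.
      - apply Z.ge_le in h. apply IZR_le in h. rewrite plus_IZR in h. auto. }
    pose proof (sq_lb 1 (c1 + IZR v1 + (c2 + IZR s2) / 2) ltac:(lra) ltac:(lra)).
    pose proof (pow2_ge_0 (c2 + IZR s2)). lra.
  - assert (Hv' : IZR s2 + 1 <= IZR v2 \/ IZR v2 <= IZR s2 - 1).
    { destruct (Z_le_gt_dec v2 (s2 - 1)); [right; apply IZR_le in l; rewrite minus_IZR in l; auto|].
      left. rewrite <- plus_IZR. apply IZR_le. lia. }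
    pose proof (sq_lb (4/5) (c2 + IZR v2) ltac:(lra) ltac:(lra)).
    pose proof (pow2_ge_0 (c1 + IZR v1 + (c2 + IZR v2) / 2)). lra.
Qed.

Definition Zp (al : R * R) (k s2 : Z) (b : nat) (phi th : R) : C :=
  Cplus (cis (2 * PI * (Br (beta_of b) (vR (k, s2)) + Br (pv al (k, s2)) (xv phi th))))
        (cis (2 * PI * (Br (beta_of b) (vR (k + 1, s2)%Z) + Br (pv al (k + 1, s2)%Z) (xv phi th)))).

Lemma Cpow5_cis x : Cpow5 (cis x) = cis (5 * x).
Proof. unfold Cpow5. rewrite !cis_add. f_equal. ring. Qed.

Lemma cis_plus_PI x : cis (x + PI) = Copp (cis x).
Proof. unfold cis, Copp. rewrite cos_plus, sin_plus, cos_PI, sin_PI. simpl. f_equal; ring. Qed.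

Lemma cis_minus_PI x : cis (x - PI) = Copp (cis x).
Proof. pose proof (cis_plus_PI (x - PI)). replace (x - PI + PI) with x in H by ring.
  rewrite H. destruct (cis (x - PI)). unfold Copp; simpl. f_equal; ring. Qed.

Lemma pair_all (al al0 : R * R) (k s2 : Z) (eps phi : R) :
  (eps = 1/5 \/ eps = -1/5) -> snd al - snd al0 + IZR s2 = eps -> fst al - fst al0 + IZR k + eps / 2 = - 1 / 2 ->
  (-1 <= k <= 0)%Z -> (-1 <= s2 <= 1)%Z ->
  (forall b t th, 1 <= t -> Cmod (Cminus (Cmult (RtoC (exp (- (2 * PI * t * Qr al0)))) (theta al (beta_of b) (0, t) (zc (xv phi th) al0 t)))
       (Cmult (RtoC (qq (2/5) t)) (Zp al k s2 b phi th))) <= KT * exp (2 * PI * 1) * qq 1 t) /\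
  (forall b th, Cmod (Zp al k s2 b phi th) <= 2) /\
  (forall b, Cpow5 (Zp al k s2 b phi (1/2)) = Copp (Cmult (Cpow5 (cis (PI * snd al0))) (Cpow5 (Zp al k s2 b phi 0)))).
Proof.
  intros He H2 H1 Hk Hs2. split; [|split].
  - intros b t th Ht.
    replace (Cmult (RtoC (qq (2/5) t)) (Zp al k s2 b phi th)) with
      (mainsum (nterm al (beta_of b) al0 (xv phi th) t) ((k, s2) :: (k + 1, s2) :: nil)%Z).
    + apply approx; auto; try lra.
      * constructor; [simpl; intros [E|[]]; inversion E; lia|]. constructor; [simpl; auto| constructor].
      * intros s Hs. simpl in Hs. destruct Hs as [<-|[<-|[]]]; simpl; lia.
      * intros [v1 v2] Hv.
        replace (wv al al0 (v1, v2)) with ((fst al - fst al0) + IZR v1, (snd al - snd al0) + IZR v2) by (unfold wv; simpl; f_equal; ring).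
        apply (pair_lattice _ _ k s2 eps); auto.
    + unfold mainsum, nterm, Zp. simpl fold_right.
      replace (Qr (wv al al0 (k, s2))) with (2/5).
      2:{ replace (wv al al0 (k, s2)) with ((fst al - fst al0 + IZR k + eps / 2) - eps / 2, snd al - snd al0 + IZR s2) by (unfold wv; simpl; f_equal; ring).
          rewrite H1, H2, Qr_decomp. destruct He; subst; field. }
      replace (Qr (wv al al0 (k + 1, s2)%Z)) with (2/5).
      2:{ replace (wv al al0 (k + 1, s2)%Z) with ((fst al - fst al0 + IZR k + eps / 2) + 1 - eps / 2, snd al - snd al0 + IZR s2)
            by (unfold wv; simpl; rewrite plus_IZR; f_equal; ring).
          rewrite H1, H2, Qr_decomp. destruct He; subst; field. }
      fold (qq (2/5) t). ring.
  - intros b th. unfold Zp. eapply Rle_trans; [apply Cmod_triangle|]. rewrite !Cmod_cis. lra.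
  - intros b. unfold Zp. rewrite !Br_xv.
    set (B0 := Br (beta_of b) (vR (k, s2))). set (B1 := Br (beta_of b) (vR (k + 1, s2)%Z)).
    unfold pv; simpl fst; simpl snd.
    set (p2 := snd al + IZR s2).
    assert (E : forall B p1, cis (2 * PI * (B + (p1 * phi + p2 * (1/2)))) = Cmult (cis (2 * PI * (B + (p1 * phi + p2 * 0)))) (cis (PI * p2))).
    { intros. rewrite cis_add. f_equal. field. }
    rewrite !E. 
    replace (Cplus (Cmult (cis (2 * PI * (B0 + ((fst al + IZR k) * phi + p2 * 0)))) (cis (PI * p2)))
                   (Cmult (cis (2 * PI * (B1 + ((fst al + IZR (k + 1)) * phi + p2 * 0)))) (cis (PI * p2))))
      with (Cmult (Cplus (cis (2 * PI * (B0 + ((fst al + IZR k) * phi + p2 * 0)))) (cis (2 * PI * (B1 + ((fst al + IZR (k + 1)) * phi + p2 * 0))))) (cis (PI * p2))) by ring.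
    set (Y := Cplus _ _).
    assert (P5M : forall u w, Cpow5 (Cmult u w) = Cmult (Cpow5 u) (Cpow5 w)) by (intros; unfold Cpow5; ring).
    rewrite P5M, !Cpow5_cis.
    assert (Hp2 : 5 * (PI * p2) = 5 * (PI * snd al0) + 5 * eps * PI).
    { unfold p2. replace (snd al + IZR s2) with (snd al0 + eps) by lra. ring. }
    rewrite Hp2.
    destruct He as [He|He]; rewrite He.
    + replace (5 * (PI * snd al0) + 5 * (1/5) * PI) with (5 * (PI * snd al0) + PI) by field.
      rewrite cis_plus_PI. ring.
    + replace (5 * (PI * snd al0) + 5 * (-1/5) * PI) with (5 * (PI * snd al0) - PI) by field.
      rewrite cis_minus_PI. ring.
Qed.

Lemma none_lattice (c1 c2 : R) (m : Z) (eps : R) : (eps = 2/5 \/ eps = -2/5) ->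
  c2 + IZR m = eps -> forall v1 v2, 1/2 <= Qr (c1 + IZR v1, c2 + IZR v2).
Proof.
  intros He H2 v1 v2. rewrite Qr_decomp.
  assert (Hv : 2/5 <= c2 + IZR v2 \/ c2 + IZR v2 <= - (2/5)).
  { destruct (Z.eq_dec v2 m) as [E|E]; [subst; destruct He; lra|].
    destruct (Z_le_gt_dec v2 (m - 1)).
    - apply IZR_le in l. rewrite minus_IZR in l. destruct He; lra.
    - assert (IZR m + 1 <= IZR v2) by (rewrite <- plus_IZR; apply IZR_le; lia). destruct He; lra. }
  pose proof (sq_lb (2/5) (c2 + IZR v2) ltac:(lra) Hv).
  pose proof (pow2_ge_0 (c1 + IZR v1 + (c2 + IZR v2) / 2)). lra.
Qed.

Lemma none_all (al al0 : R * R) (m : Z) (eps phi : R) :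
  (eps = 2/5 \/ eps = -2/5) -> snd al - snd al0 + IZR m = eps ->
  forall b t th, 1 <= t -> Cmod (Cmult (RtoC (exp (- (2 * PI * t * Qr al0)))) (theta al (beta_of b) (0, t) (zc (xv phi th) al0 t)))
     <= KT * exp (2 * PI * (1/2)) * qq (1/2) t.
Proof.
  intros He H2 b t th Ht.
  pose proof (approx al (beta_of b) al0 (xv phi th) nil (1/2) t Ht ltac:(lra) (NoDup_nil _)
    ltac:(intros s []) ) as H.
  simpl mainsum in H. unfold Cminus in H. rewrite Copp_0, Cplus_0_r in H. apply H.
  intros [v1 v2] _.
  replace (wv al al0 (v1, v2)) with ((fst al - fst al0) + IZR v1, (snd al - snd al0) + IZR v2) by (unfold wv; simpl; f_equal; ring).
  apply (none_lattice _ _ m eps); auto.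
Qed.

Lemma KT_nn : 0 <= KT.
Proof. unfold KT. pose proof (exp_pos (PI / 2)). pose proof (Rle_0_sqr CF0). unfold Rsqr in H0.
  replace (2 * exp (PI / 2) * CF0 * CF0) with (2 * exp (PI / 2) * (CF0 * CF0)) by ring.
  apply Rmult_le_pos; [lra|auto]. Qed.

Lemma per_a0 (c : nat -> nat -> C) (a0 p1 p2 n1 n2 : nat) (k1 s1 k2 s2 m1 m2 : Z) (e1 e2 f1 f2 : R) :
  (forall phi t th, 1 <= t -> Cplus (rowa c a0 a0 phi t th) (Cplus (rowa c a0 p1 phi t th)
      (Cplus (rowa c a0 p2 phi t th) (Cplus (rowa c a0 n1 phi t th) (rowa c a0 n2 phi t th)))) = RtoC 0) ->
  (e1 = 1/5 \/ e1 = -1/5) -> snd (alpha_of p1) - snd (alpha_of a0) + IZR s1 = e1 ->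
  fst (alpha_of p1) - fst (alpha_of a0) + IZR k1 + e1 / 2 = - 1 / 2 -> (-1 <= k1 <= 0)%Z -> (-1 <= s1 <= 1)%Z ->
  (e2 = 1/5 \/ e2 = -1/5) -> snd (alpha_of p2) - snd (alpha_of a0) + IZR s2 = e2 ->
  fst (alpha_of p2) - fst (alpha_of a0) + IZR k2 + e2 / 2 = - 1 / 2 -> (-1 <= k2 <= 0)%Z -> (-1 <= s2 <= 1)%Z ->
  (f1 = 2/5 \/ f1 = -2/5) -> snd (alpha_of n1) - snd (alpha_of a0) + IZR m1 = f1 ->
  (f2 = 2/5 \/ f2 = -2/5) -> snd (alpha_of n2) - snd (alpha_of a0) + IZR m2 = f2 ->
  forall b, (b <= 4)%nat -> c a0 b = RtoC 0.
Proof.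
  intros H0 He1 Hs1 Hk1 Hk1r Hs1r He2 Hs2 Hk2 Hk2r Hs2r Hf1 Hm1 Hf2 Hm2.
  set (K := KT * exp (2 * PI * 3)).
  assert (HK : 0 <= K) by (unfold K; pose proof KT_nn; pose proof (exp_pos (2 * PI * 3)); apply Rmult_le_pos; lra).
  assert (E1 : KT * exp (2 * PI * 1) <= K).
  { unfold K. apply Rmult_le_compat_l; [apply KT_nn|]. apply exp_le. pose proof PI_RGT_0; lra. }
  assert (E2 : KT * exp (2 * PI * (1/2)) <= K).
  { unfold K. apply Rmult_le_compat_l; [apply KT_nn|]. apply exp_le. pose proof PI_RGT_0; lra. }
  assert (G : forall phi, Dk (c a0) phi 0 = RtoC 0 /\ Dk (c a0) phi 1 = RtoC 0 /\ Dk (c a0) phi 2 = RtoC 0).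
  { intros phi.
    destruct (pair_all (alpha_of p1) (alpha_of a0) k1 s1 e1 phi He1 Hs1 Hk1 Hk1r Hs1r) as [P1a [P1b P1c]].
    destruct (pair_all (alpha_of p2) (alpha_of a0) k2 s2 e2 phi He2 Hs2 Hk2 Hk2r Hs2r) as [P2a [P2b P2c]].
    apply (GL (c a0) (c p1) (c p2) (c n1) (c n2)
      (fun b t th => Th a0 a0 b phi t th) (fun b t th => Th a0 p1 b phi t th) (fun b t th => Th a0 p2 b phi t th)
      (fun b t th => Th a0 n1 b phi t th) (fun b t th => Th a0 n2 b phi t th)
      (fun b th => Zp (alpha_of p1) k1 s1 b phi th) (fun b th => Zp (alpha_of p2) k2 s2 b phi th)
      (gph (alpha_of a0) phi) (Cpow5 (cis (PI * snd (alpha_of a0)))) K phi HK).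
    - intros t th Ht. apply (H0 phi t th Ht).
    - intros th. apply Cmod_cis.
    - unfold gph. replace (cis (2 * PI * (fst (alpha_of a0) * phi + snd (alpha_of a0) * (1 / 2))))
        with (Cmult (cis (PI * snd (alpha_of a0))) (cis (2 * PI * (fst (alpha_of a0) * phi + snd (alpha_of a0) * 0))))
        by (rewrite cis_add; f_equal; field).
      unfold Cpow5. ring.
    - apply Cmod_Cpow5_1, Cmod_cis.
    - intros b t th Ht. apply Hs_lemma; auto.
    - intros b t th Ht. eapply Rle_trans; [apply P1a; auto|]. apply Rmult_le_compat_r; [left; apply qq_pos| auto].
    - intros b th. apply P1b.
    - intros b. apply P1c.
    - intros b t th Ht. eapply Rle_trans; [apply P2a; auto|]. apply Rmult_le_compat_r; [left; apply qq_pos| auto].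
    - intros b th. apply P2b.
    - intros b. apply P2c.
    - intros b t th Ht. eapply Rle_trans; [apply (none_all _ _ m1 f1 phi Hf1 Hm1); auto|].
      apply Rmult_le_compat_r; [left; apply qq_pos| auto].
    - intros b t th Ht. eapply Rle_trans; [apply (none_all _ _ m2 f2 phi Hf2 Hm2); auto|].
      apply Rmult_le_compat_r; [left; apply qq_pos| auto]. }
  destruct (G 0) as [D0 [D01 D02]]. destruct (G (1/4)) as [_ [D41 _]]. destruct (G (1/8)) as [_ [_ D82]].
  apply final_alg; auto.
Qed.

Theorem proposition7p16 :
  forall c : nat -> nat -> C,
    (forall (tau : C) (z : C2), 0 < Im tau ->
       sum_n (fun a => sum_n (fun b =>
         Cmult (c a b) (Cpow5 (theta (alpha_of a) (beta_of b) tau z))) 4) 4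
       = RtoC 0) ->
    forall a b : nat, (a <= 4)%nat -> (b <= 4)%nat -> c a b = RtoC 0.
Proof.
  intros c H a b Ha Hb.
  pose proof (total c H) as T.
  destruct a as [|[|[|[|[|a]]]]]; [| | | | | lia].
  - apply (per_a0 c 0 2 3 1 4 (-1) (0) (-1) (-1) (-1) (0) (1/5) (-1/5) (-2/5) (2/5)); auto;
      try (simpl; lra); try lia.
    intros phi t th Ht. rewrite <- (T 0%nat phi t th Ht). ring.
  - apply (per_a0 c 1 3 4 0 2 (-1) (0) (-1) (0) (1) (0) (1/5) (-1/5) (2/5) (-2/5)); auto;
      try (simpl; lra); try lia.
    intros phi t th Ht. rewrite <- (T 1%nat phi t th Ht). ring.
  - apply (per_a0 c 2 0 4 1 3 (0) (0) (-1) (0) (0) (-1) (-1/5) (1/5) (2/5) (-2/5)); auto;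
      try (simpl; lra); try lia.
    intros phi t th Ht. rewrite <- (T 2%nat phi t th Ht). ring.
  - apply (per_a0 c 3 0 1 2 4 (0) (1) (0) (0) (1) (0) (1/5) (-1/5) (2/5) (-2/5)); auto;
      try (simpl; lra); try lia.
    intros phi t th Ht. rewrite <- (T 3%nat phi t th Ht). ring.
  - apply (per_a0 c 4 1 2 0 3 (0) (0) (0) (0) (0) (0) (1/5) (-1/5) (-2/5) (2/5)); auto;
      try (simpl; lra); try lia.
    intros phi t th Ht. rewrite <- (T 4%nat phi t th Ht). ring.
Qed.
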